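(* Let $\delta$ be a Displacement calculus natural deduction proof of $\alpha_1:A_1,\ldots,\alpha_n:A_n\vdash\gamma:C$. Then there is a proof net with the same hypotheses $A_1,\ldots,A_n$ whose abstract proof structure contracts (by a finite sequence of the contractions in the context) to a single comb with conclusion $C$ whose sequence of premisses, read as a string, is $\gamma$.
   Context: Strings. String terms are built from a countably infinite set of variables (each of sort $0$) and a separator constant $\mathbf{1}$ by an associative concatenation $+$ (with empty string $\epsilon$). The sort of a string term is its number of occurrences of $\mathbf{1}$. For $k\in\{>,<\}\cup\{1,2,3,\ldots\}$ and strings $\alpha$ (of sort $\geq 1$, resp. $\geq k$ if $k$ is an integer) and $\beta$: write $\alpha=\alpha'+\mathbf{1}+\alpha''$ where the displayed $\mathbf{1}$ is the first occurrence of $\mathbf{1}$ if $k={>}$, the last one if $k={<}$, and the $k$-th one if $k$ is an integer; then $\alpha\times_k\beta=\alpha'+\beta+\alpha''$. Formulas. Atomic formulas have fixed sorts. Complex formulas are $A\bullet B$, $A\backslash C$, $C/B$, $A\odot_k B$, $A\downarrow_k C$, $C\uparrow_k B$ with sorts $s(A\bullet B)=s(A)+s(B)$, $s(A\backslash C)=s(C)-s(A)$, $s(C/B)=s(C)-s(B)$, $s(A\odot_k B)=s(A)+s(B)-1$, $s(A\downarrow_k C)=s(C)+1-s(A)$, $s(C\uparrow_k B)=s(C)+1-s(B)$; a formula is well formed only when all these sorts are $\geq 0$ and the wrap operations required below are defined. Natural deduction. Judgements are $\alpha:A$ with $\alpha$ a string of sort $s(A)$. Hypotheses (and withdrawn hypotheses)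 of sort $m$ are labelled $p_0+\mathbf{1}+\cdots+\mathbf{1}+p_m$ with fresh distinct variables $p_i$. Rules: $\backslash E$: from $\alpha:A$ and $\gamma:A\backslash C$ infer $\alpha+\gamma:C$; $\backslash I$: from a derivation of $\alpha+\gamma:C$ with hypothesis $\alpha:A$, withdraw it and infer $\gamma:A\backslash C$; $/E$: from $\gamma:C/B$ and $\beta:B$ infer $\gamma+\beta:C$; $/I$: from a derivation of $\gamma+\beta:C$ withdraw $\beta:B$, infer $\gamma:C/B$; $\bullet I$: from $\alpha:A,\beta:B$ infer $\alpha+\beta:A\bullet B$; $\bullet E$: from $\delta:A\bullet B$ and a derivation of $\gamma[\alpha+\beta]:C$ from hypotheses $\alpha:A,\beta:B$, withdraw these and infer $\gamma[\delta]:C$; $\downarrow_k E$: from $\alpha:A$ and $\gamma:A\downarrow_k C$ infer $\alpha\times_k\gamma:C$; $\downarrow_k I$: from a derivation of $\alpha\times_k\gamma:C$ withdraw $\alpha:A$, infer $\gamma:A\downarrow_k C$; $\uparrow_k E$: from $\gamma:C\uparrow_k B$ and $\beta:B$ infer $\gamma\times_k\beta:C$; $\uparrow_k I$: from a derivation of $\gamma\times_k\beta:C$ withdraw $\beta:B$, infer $\gamma:C\uparrow_k B$; $\odot_k I$: from $\alpha:A,\beta:B$ infer $\alpha\times_k\beta:A\odot_k B$; $\odot_k E$: from $\delta:A\odot_k B$ and a derivation of $\gamma[\alpha\times_k\beta]:C$ from $\alpha:A,\beta:B$, withdraw these and infer $\gamma[\delta]:C$. Links. A link joins an ordered list of premiss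 formulas and an ordered list of conclusion formulas. Tensor links: $[L/]$ premisses $C/B,B$, conclusion $C$, label $+$; $[L\backslash]$ premisses $A,A\backslash C$, conclusion $C$, label $+$; $[R\bullet]$ premisses $A,B$, conclusion $A\bullet B$, label $+$; $[L\uparrow_k]$ premisses $C\uparrow_k B,B$, conclusion $C$, label $\times_k$; $[L\downarrow_k]$ premisses $A, A\downarrow_k C$, conclusion $C$, label $\times_k$; $[R\odot_k]$ premisses $A,B$, conclusion $A\odot_k B$, label $\times_k$. Par links (one formula is marked as main): $[L\bullet]$ premiss $A\bullet B$ (main), conclusions $A,B$; $[L\odot_k]$ premiss $A\odot_k B$ (main), conclusions $A,B$; $[R/]$ premiss $C$, conclusions $C/B$ (main), $B$; $[R\backslash]$ premiss $C$, conclusions $A$, $A\backslash C$ (main); $[R\uparrow_k]$ premiss $C$, conclusions $C\uparrow_k B$ (main), $B$; $[R\downarrow_k]$ premiss $C$, conclusions $A$, $A\downarrow_k C$ (main). A proof structure is a set of formula occurrences and links instantiating these schemes such that each formula is premiss of at most one link and conclusion of at most one link. Its hypotheses are formulas that are conclusion of no link; its conclusions are formulas that are premiss of no link. Its auxiliary inputs are the non-main conclusions of par links (both conclusions for $[L\bullet]$, $[L\odot_k]$). Proof nets. A proof structure corresponds to a natural deduction proof if it is built from it as follows: a hypothesis occurrence gives a single vertex; each $E$ rule for $\backslash,/,\downarrow_k,\uparrow_k$ gives the corresponding tensor $L$-link connecting the structures of its premisses; each $I$ rule for $\bullet,\odot_k$ gives the tensor $R$-link; each $I$ rule for $\backslash,/,\downarrow_k,\uparrow_k$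 gives the corresponding par $R$-link whose non-main conclusion is the withdrawn hypothesis occurrence; each $E$ rule for $\bullet,\odot_k$ gives the par $L$-link with premiss the major premiss and conclusions the withdrawn hypotheses $A,B$. A proof net is a proof structure corresponding to some natural deduction proof. Combs and abstract proof structures. A comb is a link with an ordered (possibly empty) list of premisses and one conclusion distinct from them; premisses are vertices or occurrences of the constant $\mathbf{1}$ (sort 1); the sort of a comb is the sum of the sorts of its premisses. The abstract proof structure of a proof structure is obtained by: replacing each $+$-labelled tensor link with premisses $v_1,v_2$ and conclusion $v_3$ by a comb with premisses $v_1,v_2$ and conclusion $v_3$; replacing each hypothesis $A_i$ of sort $m$ by an unlabelled vertex that is the conclusion of a comb with premisses $p_0,\mathbf{1},p_1,\ldots,\mathbf{1},p_m$ where $\alpha_i=p_0+\mathbf{1}+\cdots+\mathbf{1}+p_m$ is the label of that hypothesis; replacing each auxiliary input $A$ of sort $m$ by an unlabelled vertex that is the conclusion of a comb with premisses $v_0,\mathbf{1},v_1,\ldots,\mathbf{1},v_m$, where $v_0,\ldots,v_m$ are fresh sort-0 vertices and the par link is connected to all of $v_0,\ldots,v_m$ instead of $A$ (the expansion of that auxiliary input); keeping the label of the conclusion of the structure and making all other vertices unlabelled (each keeping the sort of its formula). Contractions (sequences $\alpha_1,\alpha_2,\beta,\gamma_1,\gamma_2$ of comb premisses may be empty). $[+]$: a comb with premisses $\alpha_1,w,\alpha_2$ and conclusion $v$, where $w$ is the conclusion of a comb with premisses $\beta$, becomes one comb with premisses $\alpha_1,\beta,\alpha_2$ and conclusion $v$.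 $[\times_k]$: a $\times_k$ tensor link with conclusion $v$ whose first premiss is the conclusion of a comb with premisses $\alpha_1,\mathbf{1},\alpha_2$ and whose second premiss is the conclusion of a comb with premisses $\beta$ becomes a comb with premisses $\alpha_1,\beta,\alpha_2$ and conclusion $v$, where the displayed $\mathbf{1}$ is the one selected by $k$ ($\alpha_1$ of sort $0$ if $k={>}$, $\alpha_2$ of sort 0 if $k={<}$, $\alpha_1$ of sort $k-1$ if $k$ is an integer). In the logical contractions, a par link with main vertex $v$ (or premiss $v_1$ for $\bullet,\odot_k$) is removed together with its connections; $e_A, e_B$ denote the expansions of its auxiliary inputs. $[\backslash]$: par $[R\backslash]$ whose premiss is the conclusion of a comb with premisses $e_A,\beta$: result comb $\beta$ with conclusion $v$. $[/]$: symmetric with comb premisses $\beta,e_B$. $[\uparrow_k]$: par $[R\uparrow_k]$ whose premiss is the conclusion of a comb with premisses $\alpha_1,e_B,\alpha_2$: result comb $\alpha_1,\mathbf{1},\alpha_2$ with conclusion $v$, with the same sort restriction on $\alpha_1,\alpha_2$ as for $[\times_k]$. $[\downarrow_k]$: par $[R\downarrow_k]$ whose premiss is the conclusion of a comb with premisses $e',\beta,e''$ where $e_A=e',\mathbf{1},e''$ with the displayed $\mathbf{1}$ selected by $k$: result comb $\beta$ with conclusion $v$. $[\bullet]$: par $[L\bullet]$ with premiss $v_1$ and a comb with premisses $\gamma_1,e_A,e_B,\gamma_2$ and conclusion $v_2$: result comb $\gamma_1,v_1,\gamma_2$ with conclusion $v_2$. $[\odot_k]$: par $[L\odot_k]$ with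 premiss $v_1$, $e_A=e',\mathbf{1},e''$ with the $\mathbf{1}$ selected by $k$, and a comb with premisses $\gamma_1,e',e_B,e'',\gamma_2$ and conclusion $v_2$: result comb $\gamma_1,v_1,\gamma_2$ with conclusion $v_2$. *)

(* Defs.v *)
From Stdlib Require Import List Arith Permutation Relations.
Import ListNotations.

Inductive wk : Type := WGt | WLt | WN (n : nat).

(* Given the sorts m1 (left part) and m2 (right part) around a displayed
   separator 1, [ksel k m1 m2] says that this 1 is the one selected by k:
   first (left part of sort 0), last (right part of sort 0), or k-th. *)
Definition ksel (k : wk) (m1 m2 : nat) : Prop :=
  match k with
  | WGt => m1 = 0
  | WLt => m2 = 0
  | WN n => m1 + 1 = n
  end.

Inductive formula : Type :=
| Atom (name : nat) (s : nat)
| Prod (A B : formula)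
| Under (A C : formula)
| Over (C B : formula)
| Wrap (k : wk) (A B : formula)
| Infix (k : wk) (A C : formula)
| Extr (k : wk) (C B : formula).

Fixpoint fsort (F : formula) : nat :=
  match F with
  | Atom _ s => s
  | Prod A B => fsort A + fsort B
  | Under A C => fsort C - fsort A
  | Over C B => fsort C - fsort B
  | Wrap _ A B => fsort A + fsort B - 1
  | Infix _ A C => fsort C + 1 - fsort A
  | Extr _ C B => fsort C + 1 - fsort B
  end.

(* the wrap operation ×_k on a first argument of sort m is defined *)
Definition kok (k : wk) (m : nat) : Prop :=
  match k with
  | WGt | WLt => 1 <= m
  | WN n => 1 <= n <= m
  end.

Fixpoint wf (F : formula) : Prop :=
  match F with
  | Atom _ _ => True
  | Prod A B => wf A /\ wf B
  | Under A C => wf A /\ wf C /\ fsort A <= fsort C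
  | Over C B => wf C /\ wf B /\ fsort B <= fsort C
  | Wrap k A B => wf A /\ wf B /\ kok k (fsort A)
  | Infix k A C => wf A /\ wf C /\ fsort A <= fsort C + 1 /\ kok k (fsort A)
  | Extr k C B => wf C /\ wf B /\ fsort B <= fsort C + 1
                  /\ kok k (fsort C + 1 - fsort B)
  end.

Inductive sym : Type := SVar (x : nat) | SOne.
Definition dstring := list sym.

Fixpoint ssort (s : dstring) : nat :=
  match s with
  | [] => 0
  | SOne :: t => S (ssort t)
  | SVar _ :: t => ssort t
  end.

Definition wrap (k : wk) (a b s : dstring) : Prop :=
  exists a1 a2, a = a1 ++ SOne :: a2 /\ ksel k (ssort a1) (ssort a2)
                /\ s = a1 ++ b ++ a2.

Definition hlab (p0 : nat) (ps : list nat) : dstring :=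
  SVar p0 :: flat_map (fun p => [SOne; SVar p]) ps.

(* ---------- natural deduction ----------
   deriv G s C u : a natural deduction proof of  G |- s : C, where G is the list
   of open hypotheses (label, formula) and u lists all variables used in the
   labels of all (open or withdrawn) hypotheses of the proof; these are required
   to be pairwise distinct (fresh distinct variables). *)
Inductive deriv : list (dstring * formula) -> dstring -> formula -> list nat -> Type :=
| d_hyp p0 ps A :
    NoDup (p0 :: ps) -> length ps = fsort A -> wf A ->
    deriv [(hlab p0 ps, A)] (hlab p0 ps) A (p0 :: ps)
| d_underE G1 G2 a g A C u1 u2 :
    deriv G1 a A u1 -> deriv G2 g (Under A C) u2 -> NoDup (u1 ++ u2) ->
    deriv (G1 ++ G2) (a ++ g) C (u1 ++ u2)
| d_underI G G' a g A C u :
    deriv G (a ++ g) C u -> Permutation G ((a, A) :: G') -> wf (Under A C) ->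
    deriv G' g (Under A C) u
| d_overE G1 G2 g b B C u1 u2 :
    deriv G1 g (Over C B) u1 -> deriv G2 b B u2 -> NoDup (u1 ++ u2) ->
    deriv (G1 ++ G2) (g ++ b) C (u1 ++ u2)
| d_overI G G' g b B C u :
    deriv G (g ++ b) C u -> Permutation G ((b, B) :: G') -> wf (Over C B) ->
    deriv G' g (Over C B) u
| d_prodI G1 G2 a b A B u1 u2 :
    deriv G1 a A u1 -> deriv G2 b B u2 -> NoDup (u1 ++ u2) ->
    deriv (G1 ++ G2) (a ++ b) (Prod A B) (u1 ++ u2)
| d_prodE G1 G2 G2' dl a b g1 g2 A B C u1 u2 :
    deriv G1 dl (Prod A B) u1 -> deriv G2 (g1 ++ a ++ b ++ g2) C u2 ->
    Permutation G2 ((a, A) :: (b, B) :: G2') -> NoDup (u1 ++ u2) ->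
    deriv (G1 ++ G2') (g1 ++ dl ++ g2) C (u1 ++ u2)
| d_infixE k G1 G2 a g s A C u1 u2 :
    deriv G1 a A u1 -> deriv G2 g (Infix k A C) u2 -> wrap k a g s ->
    NoDup (u1 ++ u2) -> deriv (G1 ++ G2) s C (u1 ++ u2)
| d_infixI k G G' a g s A C u :
    deriv G s C u -> Permutation G ((a, A) :: G') -> wrap k a g s ->
    wf (Infix k A C) -> deriv G' g (Infix k A C) u
| d_extrE k G1 G2 g b s B C u1 u2 :
    deriv G1 g (Extr k C B) u1 -> deriv G2 b B u2 -> wrap k g b s ->
    NoDup (u1 ++ u2) -> deriv (G1 ++ G2) s C (u1 ++ u2)
| d_extrI k G G' g b s B C u :
    deriv G s C u -> Permutation G ((b, B) :: G') -> wrap k g b s ->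
    wf (Extr k C B) -> deriv G' g (Extr k C B) u
| d_wrapI k G1 G2 a b s A B u1 u2 :
    deriv G1 a A u1 -> deriv G2 b B u2 -> wrap k a b s -> NoDup (u1 ++ u2) ->
    deriv (G1 ++ G2) s (Wrap k A B) (u1 ++ u2)
| d_wrapE k G1 G2 G2' dl a b s g1 g2 A B C u1 u2 :
    deriv G1 dl (Wrap k A B) u1 -> deriv G2 (g1 ++ s ++ g2) C u2 ->
    Permutation G2 ((a, A) :: (b, B) :: G2') -> wrap k a b s ->
    NoDup (u1 ++ u2) -> deriv (G1 ++ G2') (g1 ++ dl ++ g2) C (u1 ++ u2).

(* ---------- proof structures ----------
   Formula occurrences are vertices (natural numbers) carrying a formula;
   a structure is a list V of (vertex, formula) and a list L of links. *)
Inductive link : Type :=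
| LOverL (cb b c : nat)                 (* [L/]  : C/B, B   |- C      (+)   *)
| LUnderL (a ac c : nat)                (* [L\]  : A, A\C   |- C      (+)   *)
| LProdR (a b ab : nat)                 (* [R•]  : A, B     |- A•B    (+)   *)
| LExtrL (k : wk) (cb b c : nat)        (* [L↑k] : C↑kB, B  |- C      (×k)  *)
| LInfixL (k : wk) (a ac c : nat)       (* [L↓k] : A, A↓kC  |- C      (×k)  *)
| LWrapR (k : wk) (a b ab : nat)        (* [R⊙k] : A, B     |- A⊙kB   (×k)  *)
| LProdL (ab a b : nat)                 (* [L•]  : A•B (main) |- A, B       *)
| LWrapL (k : wk) (ab a b : nat)        (* [L⊙k] : A⊙kB (main) |- A, B      *)
| LOverR (c cb b : nat)                 (* [R/]  : C |- C/B (main), B       *)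
| LUnderR (c a ac : nat)                (* [R\]  : C |- A, A\C (main)       *)
| LExtrR (k : wk) (c cb b : nat)        (* [R↑k] : C |- C↑kB (main), B      *)
| LInfixR (k : wk) (c a ac : nat).      (* [R↓k] : C |- A, A↓kC (main)      *)

Definition lprem (l : link) : list nat :=
  match l with
  | LOverL cb b _ => [cb; b] | LUnderL a ac _ => [a; ac] | LProdR a b _ => [a; b]
  | LExtrL _ cb b _ => [cb; b] | LInfixL _ a ac _ => [a; ac] | LWrapR _ a b _ => [a; b]
  | LProdL ab _ _ => [ab] | LWrapL _ ab _ _ => [ab]
  | LOverR c _ _ => [c] | LUnderR c _ _ => [c] | LExtrR _ c _ _ => [c]
  | LInfixR _ c _ _ => [c]
  end.

Definition lconcl (l : link) : list nat :=
  match l with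
  | LOverL _ _ c | LUnderL _ _ c | LProdR _ _ c
  | LExtrL _ _ _ c | LInfixL _ _ _ c | LWrapR _ _ _ c => [c]
  | LProdL _ a b | LWrapL _ _ a b => [a; b]
  | LOverR _ cb b | LExtrR _ _ cb b => [cb; b]
  | LUnderR _ a ac | LInfixR _ _ a ac => [a; ac]
  end.

Fixpoint vlab (V : list (nat * formula)) (n : nat) : formula :=
  match V with
  | [] => Atom 0 0
  | (m, A) :: t => if Nat.eqb m n then A else vlab t n
  end.

Definition is_hyp (V : list (nat * formula)) (L : list link) (v : nat) : Prop :=
  In v (map fst V) /\ ~ (exists l, In l L /\ In v (lconcl l)).
Definition is_concl (V : list (nat * formula)) (L : list link) (v : nat) : Prop :=
  In v (map fst V) /\ ~ (exists l, In l L /\ In v (lprem l)).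

(* corr d V L h r : the proof structure (V, L) is built from the natural
   deduction proof d as described in the paper; h associates to each open
   hypothesis (identified by its label, whose variables are fresh) its vertex,
   and r is the vertex of the conclusion. *)
Inductive corr : forall {G s C u}, deriv G s C u ->
    list (nat * formula) -> list link -> list (dstring * nat) -> nat -> Prop :=
| c_hyp p0 ps A H1 H2 H3 v :
    corr (d_hyp p0 ps A H1 H2 H3) [(v, A)] [] [(hlab p0 ps, v)] v
| c_underE G1 G2 a g A C u1 u2 d1 d2 H V1 V2 L1 L2 h1 h2 r1 r2 r :
    corr d1 V1 L1 h1 r1 -> corr d2 V2 L2 h2 r2 ->
    NoDup (r :: map fst V1 ++ map fst V2) ->
    corr (@d_underE G1 G2 a g A C u1 u2 d1 d2 H)
      ((r, C) :: V1 ++ V2) (LUnderL r1 r2 r :: L1 ++ L2) (h1 ++ h2) r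
| c_underI G G' a g A C u d P W V L h h' x r0 r :
    corr d V L h r0 -> Permutation h ((a, x) :: h') -> ~ In r (map fst V) ->
    corr (@d_underI G G' a g A C u d P W)
      ((r, Under A C) :: V) (LUnderR r0 x r :: L) h' r
| c_overE G1 G2 g b B C u1 u2 d1 d2 H V1 V2 L1 L2 h1 h2 r1 r2 r :
    corr d1 V1 L1 h1 r1 -> corr d2 V2 L2 h2 r2 ->
    NoDup (r :: map fst V1 ++ map fst V2) ->
    corr (@d_overE G1 G2 g b B C u1 u2 d1 d2 H)
      ((r, C) :: V1 ++ V2) (LOverL r1 r2 r :: L1 ++ L2) (h1 ++ h2) r
| c_overI G G' g b B C u d P W V L h h' x r0 r :
    corr d V L h r0 -> Permutation h ((b, x) :: h') -> ~ In r (map fst V) ->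
    corr (@d_overI G G' g b B C u d P W)
      ((r, Over C B) :: V) (LOverR r0 r x :: L) h' r
| c_prodI G1 G2 a b A B u1 u2 d1 d2 H V1 V2 L1 L2 h1 h2 r1 r2 r :
    corr d1 V1 L1 h1 r1 -> corr d2 V2 L2 h2 r2 ->
    NoDup (r :: map fst V1 ++ map fst V2) ->
    corr (@d_prodI G1 G2 a b A B u1 u2 d1 d2 H)
      ((r, Prod A B) :: V1 ++ V2) (LProdR r1 r2 r :: L1 ++ L2) (h1 ++ h2) r
| c_prodE G1 G2 G2' dl a b g1 g2 A B C u1 u2 d1 d2 P H
    V1 V2 L1 L2 h1 h2 h2' xa xb r1 r2 :
    corr d1 V1 L1 h1 r1 -> corr d2 V2 L2 h2 r2 ->
    Permutation h2 ((a, xa) :: (b, xb) :: h2') ->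
    NoDup (map fst V1 ++ map fst V2) ->
    corr (@d_prodE G1 G2 G2' dl a b g1 g2 A B C u1 u2 d1 d2 P H)
      (V1 ++ V2) (LProdL r1 xa xb :: L1 ++ L2) (h1 ++ h2') r2
| c_infixE k G1 G2 a g s A C u1 u2 d1 d2 Wr H V1 V2 L1 L2 h1 h2 r1 r2 r :
    corr d1 V1 L1 h1 r1 -> corr d2 V2 L2 h2 r2 ->
    NoDup (r :: map fst V1 ++ map fst V2) ->
    corr (@d_infixE k G1 G2 a g s A C u1 u2 d1 d2 Wr H)
      ((r, C) :: V1 ++ V2) (LInfixL k r1 r2 r :: L1 ++ L2) (h1 ++ h2) r
| c_infixI k G G' a g s A C u d P Wr W V L h h' x r0 r :
    corr d V L h r0 -> Permutation h ((a, x) :: h') -> ~ In r (map fst V) ->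
    corr (@d_infixI k G G' a g s A C u d P Wr W)
      ((r, Infix k A C) :: V) (LInfixR k r0 x r :: L) h' r
| c_extrE k G1 G2 g b s B C u1 u2 d1 d2 Wr H V1 V2 L1 L2 h1 h2 r1 r2 r :
    corr d1 V1 L1 h1 r1 -> corr d2 V2 L2 h2 r2 ->
    NoDup (r :: map fst V1 ++ map fst V2) ->
    corr (@d_extrE k G1 G2 g b s B C u1 u2 d1 d2 Wr H)
      ((r, C) :: V1 ++ V2) (LExtrL k r1 r2 r :: L1 ++ L2) (h1 ++ h2) r
| c_extrI k G G' g b s B C u d P Wr W V L h h' x r0 r :
    corr d V L h r0 -> Permutation h ((b, x) :: h') -> ~ In r (map fst V) ->
    corr (@d_extrI k G G' g b s B C u d P Wr W)
      ((r, Extr k C B) :: V) (LExtrR k r0 r x :: L) h' r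
| c_wrapI k G1 G2 a b s A B u1 u2 d1 d2 Wr H V1 V2 L1 L2 h1 h2 r1 r2 r :
    corr d1 V1 L1 h1 r1 -> corr d2 V2 L2 h2 r2 ->
    NoDup (r :: map fst V1 ++ map fst V2) ->
    corr (@d_wrapI k G1 G2 a b s A B u1 u2 d1 d2 Wr H)
      ((r, Wrap k A B) :: V1 ++ V2) (LWrapR k r1 r2 r :: L1 ++ L2) (h1 ++ h2) r
| c_wrapE k G1 G2 G2' dl a b s g1 g2 A B C u1 u2 d1 d2 P Wr H
    V1 V2 L1 L2 h1 h2 h2' xa xb r1 r2 :
    corr d1 V1 L1 h1 r1 -> corr d2 V2 L2 h2 r2 ->
    Permutation h2 ((a, xa) :: (b, xb) :: h2') ->
    NoDup (map fst V1 ++ map fst V2) ->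
    corr (@d_wrapE k G1 G2 G2' dl a b s g1 g2 A B C u1 u2 d1 d2 P Wr H)
      (V1 ++ V2) (LWrapL k r1 xa xb :: L1 ++ L2) (h1 ++ h2') r2.

Definition proof_net (V : list (nat * formula)) (L : list link) : Prop :=
  exists G s C u (d : deriv G s C u) h r, corr d V L h r.

(* vertices: the original formula occurrences, and the fresh sort-0 vertices
   Exp a i (i = 0..m) of the expansion of an auxiliary input a of sort m *)
Inductive avert : Type := Old (n : nat) | Exp (a i : nat).

(* comb premisses: vertices, occurrences of the constant 1, and the label
   variables p_i of hypotheses *)
Inductive item : Type := IV (v : avert) | IOne | IVar (x : nat).

Inductive alink : Type :=
| AComb (prem : list item) (c : avert)
| ATens (k : wk) (v1 v2 v3 : avert)
(* par links: premiss, expansion(s) of the auxiliary input(s), main vertex *)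
| AUnder (c : avert) (eA : list item) (main : avert)
| AOver (c : avert) (eB : list item) (main : avert)
| AExtr (k : wk) (c : avert) (eB : list item) (main : avert)
| AInfix (k : wk) (c : avert) (eA : list item) (main : avert)
| AProd (v1 : avert) (eA eB : list item)
| AWrap (k : wk) (v1 : avert) (eA eB : list item).

Definition expand (a m : nat) : list item :=
  IV (Exp a 0) :: flat_map (fun i => [IOne; IV (Exp a i)]) (seq 1 m).

Definition item_of_sym (x : sym) : item :=
  match x with SVar p => IVar p | SOne => IOne end.

Definition aps_link (V : list (nat * formula)) (l : link) : list alink :=
  let ex a := expand a (fsort (vlab V a)) in
  match l with
  | LOverL cb b c => [AComb [IV (Old cb); IV (Old b)] (Old c)]
  | LUnderL a ac c => [AComb [IV (Old a); IV (Old ac)] (Old c)]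
  | LProdR a b ab => [AComb [IV (Old a); IV (Old b)] (Old ab)]
  | LExtrL k cb b c => [ATens k (Old cb) (Old b) (Old c)]
  | LInfixL k a ac c => [ATens k (Old a) (Old ac) (Old c)]
  | LWrapR k a b ab => [ATens k (Old a) (Old b) (Old ab)]
  | LProdL ab a b =>
      [AProd (Old ab) (ex a) (ex b); AComb (ex a) (Old a); AComb (ex b) (Old b)]
  | LWrapL k ab a b =>
      [AWrap k (Old ab) (ex a) (ex b); AComb (ex a) (Old a); AComb (ex b) (Old b)]
  | LOverR c cb b => [AOver (Old c) (ex b) (Old cb); AComb (ex b) (Old b)]
  | LUnderR c a ac => [AUnder (Old c) (ex a) (Old ac); AComb (ex a) (Old a)]
  | LExtrR k c cb b => [AExtr k (Old c) (ex b) (Old cb); AComb (ex b) (Old b)]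
  | LInfixR k c a ac => [AInfix k (Old c) (ex a) (Old ac); AComb (ex a) (Old a)]
  end.

(* abstract proof structure of (V, L), where hl gives the label of each
   hypothesis vertex *)
Definition aps (V : list (nat * formula)) (L : list link)
    (hl : list (nat * dstring)) : list alink :=
  flat_map (aps_link V) L
  ++ map (fun p => AComb (map item_of_sym (snd p)) (Old (fst p))) hl.

Definition vsort (V : list (nat * formula)) (v : avert) : nat :=
  match v with Old n => fsort (vlab V n) | Exp _ _ => 0 end.

Fixpoint isort (sv : avert -> nat) (s : list item) : nat :=
  match s with
  | [] => 0
  | IV v :: t => sv v + isort sv t
  | IOne :: t => S (isort sv t)
  | IVar _ :: t => isort sv t
  end.

Inductive contr (sv : avert -> nat) : list alink -> list alink -> Prop :=
| k_plus L R a1 a2 b w v :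
    Permutation L (AComb (a1 ++ IV w :: a2) v :: AComb b w :: R) ->
    contr sv L (AComb (a1 ++ b ++ a2) v :: R)
| k_tens L R k v1 v2 v3 a1 a2 b :
    Permutation L (ATens k v1 v2 v3 :: AComb (a1 ++ IOne :: a2) v1
                   :: AComb b v2 :: R) ->
    ksel k (isort sv a1) (isort sv a2) ->
    contr sv L (AComb (a1 ++ b ++ a2) v3 :: R)
| k_under L R c eA b v :
    Permutation L (AUnder c eA v :: AComb (eA ++ b) c :: R) ->
    contr sv L (AComb b v :: R)
| k_over L R c eB b v :
    Permutation L (AOver c eB v :: AComb (b ++ eB) c :: R) ->
    contr sv L (AComb b v :: R)
| k_extr L R k c eB a1 a2 v :
    Permutation L (AExtr k c eB v :: AComb (a1 ++ eB ++ a2) c :: R) ->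
    ksel k (isort sv a1) (isort sv a2) ->
    contr sv L (AComb (a1 ++ IOne :: a2) v :: R)
| k_infix L R k c e1 e2 b v :
    Permutation L (AInfix k c (e1 ++ IOne :: e2) v :: AComb (e1 ++ b ++ e2) c :: R) ->
    ksel k (isort sv e1) (isort sv e2) ->
    contr sv L (AComb b v :: R)
| k_prod L R v1 eA eB g1 g2 v2 :
    Permutation L (AProd v1 eA eB :: AComb (g1 ++ eA ++ eB ++ g2) v2 :: R) ->
    contr sv L (AComb (g1 ++ IV v1 :: g2) v2 :: R)
| k_wrap L R k v1 e1 e2 eB g1 g2 v2 :
    Permutation L (AWrap k v1 (e1 ++ IOne :: e2) eB
                   :: AComb (g1 ++ e1 ++ eB ++ e2 ++ g2) v2 :: R) ->
    ksel k (isort sv e1) (isort sv e2) ->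
    contr sv L (AComb (g1 ++ IV v1 :: g2) v2 :: R).

(* Main.v *)
Require Import Defs.
From Stdlib Require Import List Relations.
From Stdlib Require Import Permutation Lia Arith.
Import ListNotations.


Lemma nd_app {X} (l1 l2 : list X) :
  NoDup (l1 ++ l2) <-> NoDup l1 /\ NoDup l2 /\ (forall x, In x l1 -> ~ In x l2).
Proof.
  split.
  - intro H. split; [eapply NoDup_app_remove_r; eauto|].
    split; [eapply NoDup_app_remove_l; eauto|].
    induction l1 as [|y t IH]; simpl; [tauto|].
    inversion H; subst. intros x [->|Hx] Hin.
    + apply H2. apply in_or_app; auto.
    + eapply IH; eauto.
  - intros (A&B&C). apply NoDup_app; auto.
Qed.

Lemma nd_perm {X} (l1 l2 : list X) : Permutation l1 l2 -> NoDup l1 -> NoDup l2.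
Proof. intros; eapply Permutation_NoDup; eauto. Qed.

Definition vars (s : dstring) : list nat :=
  flat_map (fun y => match y with SVar p => [p] | SOne => [] end) s.

Lemma vars_app s t : vars (s ++ t) = vars s ++ vars t.
Proof. unfold vars. apply flat_map_app. Qed.

Definition gvars (G : list (dstring * formula)) : list nat :=
  flat_map (fun p => vars (fst p)) G.

Lemma gvars_app G1 G2 : gvars (G1 ++ G2) = gvars G1 ++ gvars G2.
Proof. unfold gvars. apply flat_map_app. Qed.

Lemma gvars_perm G1 G2 : Permutation G1 G2 -> Permutation (gvars G1) (gvars G2).
Proof. intros; unfold gvars; apply Permutation_flat_map; auto. Qed.

Lemma vars_hlab p0 ps : vars (hlab p0 ps) = p0 :: ps.
Proof. unfold hlab, vars. simpl. f_equal. induction ps; simpl; auto. f_equal; auto. Qed.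

Lemma vars_wrap k a b s : wrap k a b s ->
  exists a1 a2, a = a1 ++ SOne :: a2 /\ ksel k (ssort a1) (ssort a2) /\ s = a1 ++ b ++ a2
   /\ vars a = vars a1 ++ vars a2 /\ vars s = vars a1 ++ vars b ++ vars a2.
Proof.
  intros (a1&a2&->&K&->). exists a1, a2. repeat split; auto.
  - rewrite vars_app. reflexivity.
  - rewrite !vars_app. reflexivity.
Qed.

Definition LI (G : list (dstring * formula)) (s : dstring) (u : list nat) : Prop :=
  (forall a A, In (a, A) G -> exists p0 ps, a = hlab p0 ps /\ length ps = fsort A) /\
  NoDup (gvars G) /\ incl (gvars G) u /\ NoDup (vars s) /\ incl (vars s) (gvars G).

Lemma in_perm {X} (l1 l2 : list X) x : Permutation l1 l2 -> In x l1 -> In x l2.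
Proof. intros P H. eapply Permutation_in; eauto. Qed.

Ltac ndsplit H := rewrite ?vars_app, ?gvars_app in H; repeat (rewrite nd_app in H);
   let a := fresh in let b := fresh in let c := fresh in destruct H as (a&b&c).

Lemma disj_u {X} (u1 u2 l1 l2 : list X) : NoDup (u1 ++ u2) -> incl l1 u1 -> incl l2 u2 ->
  forall x, In x l1 -> ~ In x l2.
Proof. intros H I1 I2 x H1 H2. apply nd_app in H as (_&_&D). eapply D; eauto. Qed.

Lemma gvars_cons a A G : gvars ((a, A) :: G) = vars a ++ gvars G.
Proof. reflexivity. Qed.


Ltac permn := apply (Permutation_count_occ Nat.eq_dec); intro; rewrite ?count_occ_app; simpl; lia.

Lemma LI_I G G' s g a A u : LI G s u -> Permutation G ((a, A) :: G') ->
  Permutation (vars s) (vars a ++ vars g) -> LI G' g u.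
Proof.
  intros (L1&L2&L3&L4&L5) P Ps.
  pose proof (gvars_perm _ _ P) as PG. rewrite gvars_cons in PG.
  assert (ND : NoDup (vars a ++ gvars G')) by (eapply nd_perm; eauto).
  assert (NDs : NoDup (vars a ++ vars g)) by (eapply nd_perm; eauto).
  apply nd_app in ND as (_&ND2&D). apply nd_app in NDs as (_&NDg&Dg).
  repeat split.
  - intros b B H. apply L1. eapply in_perm; [symmetry; exact P|]. right; auto.
  - auto.
  - intros x Hx. apply L3. eapply in_perm; [symmetry; exact PG|]. apply in_or_app; auto.
  - auto.
  - intros x Hx.
    assert (H1 : In x (vars s)) by (eapply in_perm; [symmetry; exact Ps|]; apply in_or_app; auto).
    apply L5 in H1. eapply in_perm in H1; [|exact PG]. apply in_app_or in H1 as [H1|H1]; auto.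
    exfalso; eapply Dg; eauto.
Qed.

Lemma LI_E G1 G2 s1 s2 s u1 u2 : LI G1 s1 u1 -> LI G2 s2 u2 -> NoDup (u1 ++ u2) ->
  Permutation (vars s) (vars s1 ++ vars s2) -> LI (G1 ++ G2) s (u1 ++ u2).
Proof.
  intros (A1&B1&C1&D1&E1) (A2&B2&C2&D2&E2) ND P.
  repeat split.
  - intros a A H. apply in_app_or in H as [H|H]; eauto.
  - rewrite gvars_app. apply nd_app; repeat split; auto. eapply disj_u; eauto.
  - rewrite gvars_app. intros x Hx; apply in_app_or in Hx as [Hx|Hx]; apply in_or_app; auto.
  - eapply nd_perm; [symmetry; exact P|]. apply nd_app; repeat split; auto.
    eapply disj_u; eauto; eapply incl_tran; eauto.
  - rewrite gvars_app. intros x Hx. eapply in_perm in Hx; [|exact P].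
    apply in_app_or in Hx as [Hx|Hx]; apply in_or_app; auto.
Qed.

Lemma LI_L G1 G2 G2' dl s2 s a A b B T u1 u2 : LI G1 dl u1 -> LI G2 s2 u2 ->
  Permutation G2 ((a, A) :: (b, B) :: G2') -> NoDup (u1 ++ u2) ->
  Permutation (vars s2) (vars a ++ vars b ++ T) ->
  Permutation (vars s) (vars dl ++ T) -> LI (G1 ++ G2') s (u1 ++ u2).
Proof.
  intros (A1&B1&C1&D1&E1) (A2&B2&C2&D2&E2) P ND P2 Ps.
  pose proof (gvars_perm _ _ P) as PG. rewrite !gvars_cons in PG.
  assert (N2 : NoDup (vars a ++ vars b ++ gvars G2')) by (eapply nd_perm; eauto).
  assert (N3 : NoDup (vars a ++ vars b ++ T)) by (eapply nd_perm; eauto).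
  apply nd_app in N2 as (_&N2&Da). apply nd_app in N2 as (_&N2&Db).
  apply nd_app in N3 as (_&N3&Ea). apply nd_app in N3 as (_&N3&Eb).
  assert (IT : incl T (gvars G2')).
  { intros x Hx. assert (H : In x (vars s2)).
    { eapply in_perm; [symmetry; exact P2|]. do 2 (apply in_or_app; right). auto. }
    apply E2 in H. eapply in_perm in H; [|exact PG].
    apply in_app_or in H as [H|H]; [exfalso; eapply Ea; eauto; apply in_or_app; auto|].
    apply in_app_or in H as [H|H]; [exfalso; eapply Eb; eauto|auto]. }
  assert (IG : incl (gvars G2') u2).
  { intros x Hx. apply C2. eapply in_perm; [symmetry; exact PG|].
    do 2 (apply in_or_app; right). auto. }
  repeat split.
  - intros a' A' H. apply in_app_or in H as [H|H]; eauto.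
    apply A2. eapply in_perm; [symmetry; exact P|]. right; right; auto.
  - rewrite gvars_app. apply nd_app; repeat split; auto. eapply disj_u; eauto.
  - rewrite gvars_app. intros x Hx; apply in_app_or in Hx as [Hx|Hx]; apply in_or_app; auto.
  - eapply nd_perm; [symmetry; exact Ps|]. apply nd_app; repeat split; auto.
    eapply disj_u; eauto; eapply incl_tran; eauto.
  - rewrite gvars_app. intros x Hx. eapply in_perm in Hx; [|exact Ps].
    apply in_app_or in Hx as [Hx|Hx]; apply in_or_app; auto.
Qed.

Lemma gvars1 a A : gvars [(a, A)] = vars a.
Proof. unfold gvars. simpl. apply app_nil_r. Qed.

Lemma LI_deriv G s C u : deriv G s C u -> LI G s u.
Proof.
  intro d; induction d.
  - repeat split.
    + intros a B [H|[]]. inversion H; subst. eauto.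
    + rewrite gvars1, vars_hlab. auto.
    + rewrite gvars1, vars_hlab. apply incl_refl.
    + rewrite vars_hlab; auto.
    + rewrite gvars1. apply incl_refl.
  - eapply LI_E; eauto. rewrite vars_app. apply Permutation_refl.
  - eapply LI_I; eauto. rewrite vars_app. apply Permutation_refl.
  - eapply LI_E; eauto. rewrite vars_app. apply Permutation_refl.
  - eapply LI_I; eauto. rewrite vars_app. apply Permutation_app_comm.
  - eapply LI_E; eauto. rewrite vars_app. apply Permutation_refl.
  - eapply LI_L with (T := vars g1 ++ vars g2); eauto; rewrite !vars_app; permn.
  - apply vars_wrap in w as (a1&a2&_&_&_&Ea&Es).
    eapply LI_E; eauto. rewrite Es, Ea. permn.
  - apply vars_wrap in w as (a1&a2&_&_&_&Ea&Es).
    eapply LI_I; eauto. rewrite Es, Ea. permn.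
  - apply vars_wrap in w as (a1&a2&_&_&_&Ea&Es).
    eapply LI_E; eauto. rewrite Es, Ea. permn.
  - apply vars_wrap in w as (a1&a2&_&_&_&Ea&Es).
    eapply LI_I; eauto. rewrite Es, Ea. permn.
  - apply vars_wrap in w as (a1&a2&_&_&_&Ea&Es).
    eapply LI_E; eauto. rewrite Es, Ea. permn.
  - apply vars_wrap in w as (a1&a2&_&_&_&Ea&Es).
    eapply LI_L with (T := vars g1 ++ vars g2); eauto; rewrite ?vars_app, ?Es, ?Ea; permn.
Qed.


Definition red sv (L M : list alink) : Prop :=
  exists M', clos_refl_trans _ (contr sv) L M' /\ Permutation M' M.

Lemma contr_perm sv L K L' : Permutation K L -> contr sv L L' -> contr sv K L'.
Proof.
  intros P H; destruct H; [eapply k_plus|eapply k_tens|eapply k_under|eapply k_over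
   |eapply k_extr|eapply k_infix|eapply k_prod|eapply k_wrap]; eauto; eapply perm_trans; eauto.
Qed.

Lemma rt_perm sv L K M : Permutation K L -> clos_refl_trans _ (contr sv) L M ->
  exists M', clos_refl_trans _ (contr sv) K M' /\ Permutation M' M.
Proof.
  intros P H. apply clos_rt_rt1n in H. destruct H as [|x y Hs Hr].
  - exists K; split; [apply rt_refl|auto].
  - exists y; split; [|apply Permutation_refl].
    eapply rt_trans; [apply rt_step; eapply contr_perm; eauto|]. apply clos_rt1n_rt; eauto.
Qed.

Lemma red_refl sv L M : Permutation L M -> red sv L M.
Proof. intros; exists L; split; [apply rt_refl|auto]. Qed.

Lemma red_trans sv L M N : red sv L M -> red sv M N -> red sv L N.
Proof.
  intros (M'&H1&P1) (N'&H2&P2).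
  destruct (rt_perm sv M M' N') as (N''&H3&P3); auto.
  exists N''; split; [eapply rt_trans; eauto|eapply perm_trans; eauto].
Qed.

Lemma red_step sv L M : contr sv L M -> red sv L M.
Proof. intros; exists M; split; [apply rt_step; auto|apply Permutation_refl]. Qed.

Lemma contr_frame sv L M K : contr sv L M -> contr sv (L ++ K) (M ++ K).
Proof.
  intros H; destruct H; simpl;
  [eapply k_plus|eapply k_tens|eapply k_under|eapply k_over
   |eapply k_extr|eapply k_infix|eapply k_prod|eapply k_wrap]; eauto;
  (eapply perm_trans; [apply Permutation_app_tail; eauto|simpl; apply Permutation_refl]).
Qed.

Lemma red_frame sv L M K : red sv L M -> red sv (L ++ K) (M ++ K).
Proof.
  intros (M'&H&P). exists (M' ++ K); split; [|apply Permutation_app_tail; auto].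
  clear P. induction H; [apply rt_step; apply contr_frame; auto|apply rt_refl|eapply rt_trans; eauto].
Qed.

Lemma red_frame_l sv L M K : red sv L M -> red sv (K ++ L) (K ++ M).
Proof.
  intros H. eapply red_trans; [apply red_refl, Permutation_app_comm|].
  eapply red_trans; [apply red_frame; eauto|apply red_refl, Permutation_app_comm].
Qed.

Lemma red_two sv L1 L2 M1 M2 : red sv L1 M1 -> red sv L2 M2 -> red sv (L1 ++ L2) (M1 ++ M2).
Proof. intros; eapply red_trans; [apply red_frame; eauto|apply red_frame_l; auto]. Qed.

Definition fsub (f : item -> item) (l : alink) : alink :=
  match l with
  | AComb p c => AComb (map f p) c
  | ATens k a b c => ATens k a b c
  | AUnder c e v => AUnder c (map f e) v
  | AOver c e v => AOver c (map f e) v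
  | AExtr k c e v => AExtr k c (map f e) v
  | AInfix k c e v => AInfix k c (map f e) v
  | AProd v e1 e2 => AProd v (map f e1) (map f e2)
  | AWrap k v e1 e2 => AWrap k v (map f e1) (map f e2)
  end.

Definition goodf sv (f : item -> item) : Prop :=
  (forall v, f (IV v) = IV v) /\ f IOne = IOne /\
  (forall p l, isort sv (f (IVar p) :: l) = isort sv l).

Lemma isort_map sv f l : goodf sv f -> isort sv (map f l) = isort sv l.
Proof.
  intros (H1&H2&H3). induction l as [|[v| |p] t IH]; cbn [map]; auto.
  - rewrite H1; simpl; auto.
  - rewrite H2; simpl; auto.
  - rewrite H3; auto.
Qed.

Lemma contr_map sv f L M : goodf sv f -> contr sv L M ->
  contr sv (map (fsub f) L) (map (fsub f) M).
Proof.
  intros Hg H. pose proof Hg as (H1&H2&_).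
  destruct H as [L R a1 a2 b w v P|L R k v1 v2 v3 a1 a2 b P K|L R c eA b v P|L R c eB b v P
   |L R k c eB a1 a2 v P K|L R k c e1 e2 b v P K|L R v1 eA eB g1 g2 v2 P
   |L R k v1 e1 e2 eB g1 g2 v2 P K];
  apply (Permutation_map (fsub f)) in P; simpl in P; rewrite ?map_app in P; simpl in P;
  rewrite ?H1, ?H2, ?map_app in P; simpl; rewrite ?map_app; simpl; rewrite ?H1, ?H2.
  - eapply k_plus; eauto.
  - eapply k_tens; eauto. rewrite !isort_map; auto.
  - eapply k_under; eauto.
  - eapply k_over; eauto.
  - eapply k_extr; eauto. rewrite !isort_map; auto.
  - eapply k_infix; eauto. rewrite !isort_map; auto.
  - eapply k_prod; eauto.
  - eapply k_wrap; eauto. rewrite !isort_map; auto.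
Qed.

Lemma red_map sv f L M : goodf sv f -> red sv L M -> red sv (map (fsub f) L) (map (fsub f) M).
Proof.
  intros Hg (M'&H&P). exists (map (fsub f) M'); split; [|apply Permutation_map; auto].
  clear P. induction H; [apply rt_step; apply contr_map; auto|apply rt_refl|eapply rt_trans; eauto].
Qed.


Definition m (s : dstring) : list item := map item_of_sym s.
Definition hc (h : list (dstring * nat)) : list alink :=
  map (fun p => AComb (m (fst p)) (Old (snd p))) h.
Definition AL W L := flat_map (aps_link W) L.

Lemma hc_app h1 h2 : hc (h1 ++ h2) = hc h1 ++ hc h2.
Proof. apply map_app. Qed.
Lemma AL_app W L1 L2 : AL W (L1 ++ L2) = AL W L1 ++ AL W L2.
Proof. apply flat_map_app. Qed.
Lemma m_app s t : m (s ++ t) = m s ++ m t.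
Proof. apply map_app. Qed.

Fixpoint idx (p : nat) (l : list nat) : option nat :=
  match l with
  | [] => None
  | q :: t => if Nat.eqb p q then Some 0 else option_map S (idx p t)
  end.

Definition sig (x : nat) (ps : list nat) (it : item) : item :=
  match it with
  | IVar p => match idx p ps with Some i => IV (Exp x i) | None => IVar p end
  | _ => it
  end.

Lemma expand_fix f a k : (forall v, f (IV v) = IV v) -> f IOne = IOne ->
  map f (expand a k) = expand a k.
Proof.
  intros H1 H2. unfold expand. simpl. rewrite H1. f_equal.
  generalize 1. induction k; intro j; simpl; auto. rewrite H1, H2, IHk; auto.
Qed.

Lemma aps_link_fix f W l : (forall v, f (IV v) = IV v) -> f IOne = IOne ->
  map (fsub f) (aps_link W l) = aps_link W l.
Proof.
  intros H1 H2. destruct l; cbn [aps_link map fsub]; rewrite ?H1, ?H2, ?expand_fix; auto.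
Qed.

Lemma AL_fix f W L : (forall v, f (IV v) = IV v) -> f IOne = IOne ->
  map (fsub f) (AL W L) = AL W L.
Proof.
  intros H1 H2. induction L; simpl; auto. unfold AL in *. simpl.
  rewrite map_app, IHL, aps_link_fix; auto.
Qed.

Lemma sig_good sv x ps : (forall a i, sv (Exp a i) = 0) -> goodf sv (sig x ps).
Proof.
  intro H. repeat split. intros p l. simpl. destruct (idx p ps); simpl; rewrite ?H; auto.
Qed.

Lemma idx_app q pre t : ~ In q pre -> idx q (pre ++ q :: t) = Some (length pre).
Proof.
  induction pre as [|y pre IH]; simpl; intro H.
  - rewrite Nat.eqb_refl; auto.
  - destruct (Nat.eqb_spec q y); [exfalso; auto|]. rewrite IH; auto.
Qed.

Lemma idx_none q l : ~ In q l -> idx q l = None.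
Proof.
  induction l as [|y l IH]; simpl; intro H; auto.
  destruct (Nat.eqb_spec q y); [exfalso; auto|]. rewrite IH; auto.
Qed.

Lemma sig_hlab_aux x ps pre : NoDup (pre ++ ps) ->
  map (sig x (pre ++ ps)) (m (flat_map (fun p => [SOne; SVar p]) ps)) =
  flat_map (fun i => [IOne; IV (Exp x i)]) (seq (length pre) (length ps)).
Proof.
  revert pre. induction ps as [|q t IH]; intros pre H; simpl; auto.
  rewrite idx_app.
  - f_equal. f_equal. specialize (IH (pre ++ [q])). rewrite <- app_assoc in IH.
    rewrite length_app in IH. simpl in IH. rewrite Nat.add_1_r in IH. apply IH; auto.
  - apply NoDup_remove_2 in H. intro; apply H; apply in_or_app; auto.
Qed.

Lemma sig_hlab x p0 ps : NoDup (p0 :: ps) ->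
  map (sig x (p0 :: ps)) (m (hlab p0 ps)) = expand x (length ps).
Proof.
  intro H. unfold hlab, expand. cbn [m map item_of_sym sig idx]. rewrite Nat.eqb_refl. simpl.
  f_equal. apply (sig_hlab_aux x ps [p0]). auto.
Qed.

Lemma sig_fix x ps s : (forall p, In p (vars s) -> ~ In p ps) -> map (sig x ps) (m s) = m s.
Proof.
  induction s as [|[p|] t IH]; simpl; intro H; auto.
  - rewrite idx_none; [|apply H; simpl; auto]. f_equal; apply IH; intros; apply H; simpl; auto.
  - f_equal; apply IH; auto.
Qed.

Lemma hc_fix x ps h : (forall a p, In a (map fst h) -> In p (vars a) -> ~ In p ps) ->
  map (fsub (sig x ps)) (hc h) = hc h.
Proof.
  induction h as [|[a v] t IH]; simpl; intro H; auto.
  rewrite sig_fix; [|intros; eapply H; eauto]. f_equal. apply IH; intros; eapply H; eauto.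
Qed.

Lemma isort_m sv s : isort sv (m s) = ssort s.
Proof. induction s as [|[p|] t IH]; simpl; auto. Qed.

Lemma isort_msig sv x ps s : (forall a i, sv (Exp a i) = 0) ->
  isort sv (map (sig x ps) (m s)) = ssort s.
Proof.
  intro H. rewrite isort_map; [apply isort_m|apply sig_good; auto].
Qed.


Definition pr (V : list (nat * formula)) (p : dstring * nat) := (fst p, vlab V (snd p)).
Definition CL L := flat_map lconcl L.
Definition PL L := flat_map lprem L.
Definition Rg (V : list (nat * formula)) n mx := forall v, In v (map fst V) -> n <= v < mx.

Definition SI V L h r C G :=
  NoDup (map fst V) /\ In r (map fst V) /\ vlab V r = C /\ map (pr V) h = G /\
  NoDup (map snd h) /\ incl (map snd h) (map fst V) /\
  incl (CL L) (map fst V) /\ incl (PL L) (map fst V) /\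
  (forall v, In v (map fst V) -> (In v (map snd h) <-> ~ In v (CL L))) /\
  (forall v, In v (map fst V) -> (v = r <-> ~ In v (PL L))).

Lemma vlab_cons_ne V r A n : n <> r -> vlab ((r, A) :: V) n = vlab V n.
Proof. intro H. simpl. destruct (Nat.eqb_spec r n); [congruence|auto]. Qed.
Lemma vlab_cons_eq V r A : vlab ((r, A) :: V) r = A.
Proof. simpl. rewrite Nat.eqb_refl. auto. Qed.
Lemma vlab_app_l V1 V2 n : In n (map fst V1) -> vlab (V1 ++ V2) n = vlab V1 n.
Proof.
  induction V1 as [|[k A] t IH]; simpl; [tauto|]. intros [->|H].
  - rewrite Nat.eqb_refl; auto.
  - destruct (Nat.eqb k n); auto.
Qed.
Lemma vlab_app_r V1 V2 n : ~ In n (map fst V1) -> vlab (V1 ++ V2) n = vlab V2 n.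
Proof.
  induction V1 as [|[k A] t IH]; simpl; auto. intros H.
  destruct (Nat.eqb_spec k n); [exfalso; auto|]. apply IH; auto.
Qed.

Lemma CL_cons l L : CL (l :: L) = lconcl l ++ CL L. Proof. reflexivity. Qed.
Lemma PL_cons l L : PL (l :: L) = lprem l ++ PL L. Proof. reflexivity. Qed.
Lemma CL_app L1 L2 : CL (L1 ++ L2) = CL L1 ++ CL L2. Proof. apply flat_map_app. Qed.
Lemma PL_app L1 L2 : PL (L1 ++ L2) = PL L1 ++ PL L2. Proof. apply flat_map_app. Qed.

Lemma map_pr_ext V V' h : incl (map snd h) (map fst V) ->
  (forall v, In v (map fst V) -> vlab V' v = vlab V v) -> map (pr V') h = map (pr V) h.
Proof.
  intros I E. apply map_ext_in. intros [a v] H. unfold pr; simpl. f_equal. apply E.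
  apply I. apply (in_map snd) in H. auto.
Qed.

Lemma in_app_iff' {X} (x : X) l1 l2 : In x (l1 ++ l2) <-> In x l1 \/ In x l2.
Proof. apply in_app_iff. Qed.

Ltac rg H v := let K := fresh in pose proof (H v) as K.

Lemma SI_E V1 L1 h1 r1 C1 G1 V2 L2 h2 r2 C2 G2 n m1 m2 lk C :
  SI V1 L1 h1 r1 C1 G1 -> SI V2 L2 h2 r2 C2 G2 -> Rg V1 n m1 -> Rg V2 m1 m2 ->
  lprem lk = [r1; r2] -> lconcl lk = [m2] ->
  SI ((m2, C) :: V1 ++ V2) (lk :: L1 ++ L2) (h1 ++ h2) m2 C (G1 ++ G2).
Proof.
  intros (N1&I1&E1&M1&H1&J1&K1&P1&Y1&Z1) (N2&I2&E2&M2&H2&J2&K2&P2&Y2&Z2) R1 R2 Lp Lc.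
  pose proof (R1 r1 I1). pose proof (R2 r2 I2).
  assert (D : forall v, In v (map fst V1) -> ~ In v (map fst V2)).
  { intros v A B. apply R1 in A. apply R2 in B. lia. }
  assert (NR1 : ~ In m2 (map fst V1)) by (intro A; apply R1 in A; lia).
  assert (NR2 : ~ In m2 (map fst V2)) by (intro A; apply R2 in A; lia).
  assert (VL1 : forall v, In v (map fst V1) -> vlab ((m2, C) :: V1 ++ V2) v = vlab V1 v).
  { intros v A. rewrite vlab_cons_ne by (intros ->; auto). apply vlab_app_l; auto. }
  assert (VL2 : forall v, In v (map fst V2) -> vlab ((m2, C) :: V1 ++ V2) v = vlab V2 v).
  { intros v A. rewrite vlab_cons_ne by (intros ->; auto). apply vlab_app_r.
    intro B; eapply D; eauto. }
  unfold SI. simpl map. rewrite !map_app, CL_cons, PL_cons, CL_app, PL_app, Lp, Lc.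
  repeat split.
  - constructor; [rewrite in_app_iff; tauto|]. apply nd_app; repeat split; auto.
  - left; auto.
  - apply vlab_cons_eq.
  - rewrite (map_pr_ext V1 _ h1), (map_pr_ext V2 _ h2); subst; auto.
  - apply nd_app; repeat split; auto. intros v A B; apply J1 in A; apply J2 in B; eapply D; eauto.
  - intros v A. right. apply in_app_iff in A as [A|A]; apply in_app_iff; auto.
  - intros v A. simpl in A. destruct A as [<-|A]; [left; auto|right].
    apply in_app_iff in A as [A|A]; apply in_app_iff; auto.
  - intros v A. simpl in A. destruct A as [<-|[<-|A]]; [right; apply in_app_iff; auto|right; apply in_app_iff; auto|right].
    apply in_app_iff in A as [A|A]; apply in_app_iff; auto.
  - intros A B. simpl in B. destruct B as [<-|B].
    + apply in_app_iff in A as [A|A]; [apply J1 in A|apply J2 in A]; auto.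
    + apply in_app_iff in A as [A|A]; apply in_app_iff in B as [B|B].
      * apply (Y1 v); auto.
      * apply J1 in A. apply K2 in B. eapply D; eauto.
      * apply J2 in A. apply K1 in B. eapply D; eauto.
      * apply (Y2 v); auto.
  - intros B. simpl in H3. destruct H3 as [<-|A]; [exfalso; apply B; left; auto|].
    apply in_app_iff in A as [A|A]; apply in_app_iff.
    + left. apply (proj2 (Y1 v A)). intro Q; apply B. right. simpl. apply in_app_iff; auto.
    + right. apply (proj2 (Y2 v A)). intro Q; apply B. right. simpl. apply in_app_iff; auto.
  - intros -> B. simpl in B. destruct B as [<-|[<-|B]].
    + apply NR1; auto.
    + apply NR2; auto.
    + apply in_app_iff in B as [B|B]; [apply P1 in B|apply P2 in B]; auto.
  - intros B. simpl in H3. destruct H3 as [<-|A]; auto. exfalso.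
    apply in_app_iff in A as [A|A].
    + destruct (Nat.eq_dec v r1) as [->|Q]; [apply B; simpl; auto|].
      apply B. simpl. right; right. apply in_app_iff. left.
      destruct (in_dec Nat.eq_dec v (PL L1)); auto. exfalso; apply Q; apply Z1; auto.
    + destruct (Nat.eq_dec v r2) as [->|Q]; [apply B; simpl; auto|].
      apply B. simpl. right; right. apply in_app_iff. right.
      destruct (in_dec Nat.eq_dec v (PL L2)); auto. exfalso; apply Q; apply Z2; auto.
Qed.

Lemma SI_I V L h r0 C0 G n mx a x h' lk F :
  SI V L h r0 C0 G -> Rg V n mx -> Permutation h ((a, x) :: h') ->
  lprem lk = [r0] -> (forall v, In v (lconcl lk) <-> v = x \/ v = mx) ->
  SI ((mx, F) :: V) (lk :: L) h' mx F (map (pr V) h').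
Proof.
  intros (N1&I1&E1&M1&H1&J1&K1&P1&Y1&Z1) R1 P Lp Lc.
  assert (NR : ~ In mx (map fst V)) by (intro A; apply R1 in A; lia).
  assert (PS : Permutation (map snd h) (x :: map snd h')) by (apply (Permutation_map snd) in P; exact P).
  assert (ND : NoDup (x :: map snd h')) by (eapply nd_perm; eauto).
  assert (Ih : forall v, In v (map snd h') -> In v (map snd h)).
  { intros v A. eapply in_perm; [symmetry; exact PS|]. right; auto. }
  assert (Ix : In x (map fst V)) by (apply J1; eapply in_perm; [symmetry; exact PS|]; left; auto).
  assert (VL : forall v, In v (map fst V) -> vlab ((mx, F) :: V) v = vlab V v).
  { intros v A. apply vlab_cons_ne. intros ->; auto. }
  unfold SI. simpl map. rewrite CL_cons, PL_cons, Lp.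
  repeat split.
  - constructor; auto.
  - left; auto.
  - apply vlab_cons_eq.
  - apply map_pr_ext; auto. intros v A; apply J1, Ih; auto.
  - inversion ND; auto.
  - intros v A. right. apply J1, Ih; auto.
  - intros v A. apply in_app_iff in A as [A|A].
    + apply Lc in A as [->| ->]; [right|left]; auto.
    + right; auto.
  - intros v A. simpl in A. destruct A as [<-|A]; right; auto.
  - intros A B. apply in_app_iff in B as [B|B].
    + apply Lc in B as [->| ->].
      * inversion ND; auto.
      * apply NR, J1, Ih; auto.
    + apply (Y1 v); auto.
  - intros B. simpl in H. destruct H as [<-|A].
    + exfalso; apply B, in_app_iff; left; apply Lc; auto.
    + assert (Q : In v (map snd h)).
      { apply (proj2 (Y1 v A)). intro Q; apply B, in_app_iff; auto. }
      eapply in_perm in Q; [|exact PS]. destruct Q as [->|Q]; auto.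
      exfalso; apply B, in_app_iff; left; apply Lc; auto.
  - intros -> B. simpl in B. destruct B as [<-|B]; auto.
  - intros B. simpl in H. destruct H as [<-|A]; auto. exfalso.
    destruct (Nat.eq_dec v r0) as [->|Q]; [apply B; simpl; auto|].
    apply B. simpl. right.
    destruct (in_dec Nat.eq_dec v (PL L)); auto. exfalso; apply Q; apply Z1; auto.
Qed.

Lemma SI_L V1 L1 h1 r1 C1 G1 V2 L2 h2 r2 C G2 n m1 m2 a xa b xb h2' lk :
  SI V1 L1 h1 r1 C1 G1 -> SI V2 L2 h2 r2 C G2 -> Rg V1 n m1 -> Rg V2 m1 m2 ->
  Permutation h2 ((a, xa) :: (b, xb) :: h2') ->
  lprem lk = [r1] -> lconcl lk = [xa; xb] ->
  SI (V1 ++ V2) (lk :: L1 ++ L2) (h1 ++ h2') r2 C (G1 ++ map (pr V2) h2').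
Proof.
  intros (N1&I1&E1&M1&H1&J1&K1&P1&Y1&Z1) (N2&I2&E2&M2&H2&J2&K2&P2&Y2&Z2) R1 R2 P Lp Lc.
  pose proof (R1 r1 I1). pose proof (R2 r2 I2).
  assert (D : forall v, In v (map fst V1) -> ~ In v (map fst V2)).
  { intros v A B. apply R1 in A. apply R2 in B. lia. }
  assert (PS : Permutation (map snd h2) (xa :: xb :: map snd h2')) by (apply (Permutation_map snd) in P; exact P).
  assert (ND : NoDup (xa :: xb :: map snd h2')) by (eapply nd_perm; eauto).
  assert (Ih : forall v, In v (map snd h2') -> In v (map snd h2)).
  { intros v A. eapply in_perm; [symmetry; exact PS|]. right; right; auto. }
  assert (Ixa : In xa (map fst V2)) by (apply J2; eapply in_perm; [symmetry; exact PS|]; left; auto).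
  assert (Ixb : In xb (map fst V2)) by (apply J2; eapply in_perm; [symmetry; exact PS|]; right; left; auto).
  unfold SI. rewrite !map_app, CL_cons, PL_cons, CL_app, PL_app, Lp, Lc.
  repeat split.
  - apply nd_app; repeat split; auto.
  - apply in_app_iff; auto.
  - rewrite vlab_app_r; auto. intro A; eapply D; eauto.
  - rewrite (map_pr_ext V1 _ h1), (map_pr_ext V2 _ h2'); subst; auto;
    intros v A; first [apply vlab_app_r; intro B; eapply D; eauto | apply J2, Ih; auto | apply vlab_app_l; auto].
  - apply nd_app; repeat split; auto.
    + apply (NoDup_app_remove_l [xa; xb]); exact ND.
    + intros v A B. apply J1 in A. apply Ih, J2 in B. eapply D; eauto.
  - intros v A. apply in_app_iff in A as [A|A]; apply in_app_iff; [left; apply J1|right; apply J2, Ih]; auto.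
  - intros v A. simpl in A. destruct A as [<-|[<-|A]]; apply in_app_iff; auto.
    apply in_app_iff in A as [A|A]; auto.
  - intros v A. simpl in A. destruct A as [<-|A]; apply in_app_iff; auto.
    apply in_app_iff in A as [A|A]; auto.
  - intros A B. simpl in B. apply in_app_iff in A as [A|A].
    + destruct B as [<-|[<-|B]].
      * apply J1 in A. eapply D; eauto.
      * apply J1 in A. eapply D; eauto.
      * apply in_app_iff in B as [B|B].
        -- apply (Y1 v); auto.
        -- apply J1 in A. apply K2 in B. eapply D; eauto.
    + destruct B as [<-|[<-|B]].
      * apply (NoDup_remove_2 [] (xb :: map snd h2') xa ND). right; auto.
      * apply (NoDup_remove_2 [xa] (map snd h2') xb ND). apply in_or_app; auto.
      * apply in_app_iff in B as [B|B].
        -- apply Ih, J2 in A. apply K1 in B. eapply D; eauto.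
        -- apply (Y2 v); auto; apply J2, Ih; auto.
  - intros B. apply in_app_iff in H3 as [A|A]; apply in_app_iff.
    + left. apply (proj2 (Y1 v A)). intro Q; apply B. simpl. right; right. apply in_app_iff; auto.
    + right. assert (Q : In v (map snd h2)).
      { apply (proj2 (Y2 v A)). intro Q; apply B. simpl. right; right. apply in_app_iff; auto. }
      eapply in_perm in Q; [|exact PS]. destruct Q as [->|[->|Q]]; auto;
      exfalso; apply B; simpl; auto.
  - intros -> B. simpl in B. destruct B as [B|B].
    + subst r2. eapply D; eauto.
    + apply in_app_iff in B as [B|B].
      * apply P1 in B. eapply D; eauto.
      * apply (Z2 r2); auto.
  - intros B. apply in_app_iff in H3 as [A|A].
    + exfalso. destruct (Nat.eq_dec v r1) as [->|Q]; [apply B; simpl; auto|].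
      apply B. simpl. right. apply in_app_iff. left.
      destruct (in_dec Nat.eq_dec v (PL L1)); auto. exfalso; apply Q; apply Z1; auto.
    + apply Z2; auto. intro Q; apply B. simpl. right. apply in_app_iff; auto.
Qed.


Definition agree (W V : list (nat * formula)) := forall v, In v (map fst V) -> vlab W v = vlab V v.

Lemma agree_cons W V r F : agree W ((r, F) :: V) -> ~ In r (map fst V) -> agree W V.
Proof.
  intros H N v A. rewrite <- (vlab_cons_ne V r F); [apply H; right; auto|]. intros ->; auto.
Qed.
Lemma agree_app_l W V1 V2 : agree W (V1 ++ V2) -> agree W V1.
Proof.
  intros H v A. rewrite <- (vlab_app_l V1 V2); auto. apply H. rewrite map_app; apply in_app_iff; auto.
Qed.
Lemma agree_app_r W V1 V2 : agree W (V1 ++ V2) ->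
  (forall v, In v (map fst V2) -> ~ In v (map fst V1)) -> agree W V2.
Proof.
  intros H D v A. rewrite <- (vlab_app_r V1 V2); auto. apply H. rewrite map_app; apply in_app_iff; auto.
Qed.

Lemma AL_cons W l L : AL W (l :: L) = aps_link W l ++ AL W L.
Proof. reflexivity. Qed.

Lemma red_E2 sv W lk L1 L2 h1 h2 c1 c2 out :
  red sv (AL W L1 ++ hc h1) [c1] -> red sv (AL W L2 ++ hc h2) [c2] ->
  red sv (aps_link W lk ++ [c1; c2]) out ->
  red sv (AL W (lk :: L1 ++ L2) ++ hc (h1 ++ h2)) out.
Proof.
  intros R1 R2 R3. eapply red_trans; [|exact R3].
  eapply red_trans; [apply red_refl|].
  - rewrite AL_cons, AL_app, hc_app, <- !app_assoc.
    apply Permutation_app_head.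
    instantiate (1 := (AL W L1 ++ hc h1) ++ (AL W L2 ++ hc h2)).
    rewrite <- !app_assoc. apply Permutation_app_head. rewrite !app_assoc.
    apply Permutation_app_tail. apply Permutation_app_comm.
  - apply red_frame_l. apply (red_two _ _ _ [c1] [c2]); auto.
Qed.

Lemma comb2 sv r r1 r2 p1 p2 :
  red sv [AComb [IV (Old r1); IV (Old r2)] (Old r); AComb p1 (Old r1); AComb p2 (Old r2)]
         [AComb (p1 ++ p2) (Old r)].
Proof.
  eapply red_trans.
  - apply red_step. apply (k_plus sv _ [AComb p2 (Old r2)] [] [IV (Old r2)] p1 (Old r1) (Old r)).
    simpl. apply Permutation_refl.
  - replace (p1 ++ p2) with (p1 ++ p2 ++ []) by (rewrite app_nil_r; auto).
    apply red_step. apply (k_plus sv _ [] p1 [] p2 (Old r2) (Old r)). simpl. apply Permutation_refl.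
Qed.

Lemma tens2 sv k r r1 r2 a b s : wrap k a b s ->
  red sv [ATens k (Old r1) (Old r2) (Old r); AComb (m a) (Old r1); AComb (m b) (Old r2)]
         [AComb (m s) (Old r)].
Proof.
  intros (a1&a2&->&K&->). apply red_step. rewrite !m_app.
  apply (k_tens sv _ [] k (Old r1) (Old r2) (Old r) (m a1) (m a2) (m b)).
  - simpl. apply Permutation_refl.
  - rewrite !isort_m. auto.
Qed.

Lemma I_setup V h G G' a A : map (pr V) h = G -> Permutation G ((a, A) :: G') ->
  exists x h', Permutation h ((a, x) :: h') /\ vlab V x = A /\ map (pr V) h' = G'.
Proof.
  intros <- P. symmetry in P. apply Permutation_map_inv in P as (l&E&P).
  destruct l as [|[a' x] h']; [discriminate|]. simpl in E. inversion E; subst.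
  exists x, h'. repeat split; auto.
Qed.

Lemma I_setup2 V h G G' a A b B : map (pr V) h = G -> Permutation G ((a, A) :: (b, B) :: G') ->
  exists xa xb h', Permutation h ((a, xa) :: (b, xb) :: h') /\ vlab V xa = A /\ vlab V xb = B
    /\ map (pr V) h' = G'.
Proof.
  intros <- P. symmetry in P. apply Permutation_map_inv in P as (l&E&P).
  destruct l as [|[a' x] [|[b' y] h']]; try discriminate. simpl in E. inversion E; subst.
  exists x, y, h'. repeat split; auto.
Qed.

Lemma in_gvars a A G p : In (a, A) G -> In p (vars a) -> In p (gvars G).
Proof.
  intros H1 H2. unfold gvars. apply in_flat_map. exists (a, A). auto.
Qed.

Lemma lab_setup G s u a A G' : LI G s u -> Permutation G ((a, A) :: G') ->
  exists p0 ps, a = hlab p0 ps /\ length ps = fsort A /\ NoDup (p0 :: ps) /\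
    (forall p, In p (gvars G') -> ~ In p (p0 :: ps)) /\
    (forall p, In p (gvars G) -> In p (p0 :: ps) \/ In p (gvars G')).
Proof.
  intros (L1&L2&_) P.
  destruct (L1 a A) as (p0&ps&E&Len); [eapply in_perm; [symmetry; exact P|]; left; auto|].
  pose proof (gvars_perm _ _ P) as PG. rewrite gvars_cons, E, vars_hlab in PG.
  assert (N : NoDup ((p0 :: ps) ++ gvars G')) by (eapply nd_perm; eauto).
  apply nd_app in N as (N1&N2&D).
  exists p0, ps. repeat split; auto.
  - intros p A1 A2. eapply D; eauto.
  - intros p Hp. eapply in_perm in Hp; [|exact PG]. apply in_app_iff in Hp. auto.
Qed.

Lemma hlabels V h G a p : map (pr V) h = G -> In a (map fst h) -> In p (vars a) -> In p (gvars G).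
Proof.
  intros <- A B. apply in_map_iff in A as ([a' x]&E&I). simpl in E; subst.
  eapply (in_gvars a (vlab V x)); eauto. apply in_map_iff. exists (a, x); auto.
Qed.

Lemma hc_perm h h' : Permutation h h' -> Permutation (hc h) (hc h').
Proof. apply Permutation_map. Qed.

Lemma red_I sv W L h x a h' p0 ps s r0 :
  red sv (AL W L ++ hc h) [AComb (m s) (Old r0)] ->
  Permutation h ((a, x) :: h') -> a = hlab p0 ps -> NoDup (p0 :: ps) ->
  (forall a' p, In a' (map fst h') -> In p (vars a') -> ~ In p (p0 :: ps)) ->
  (forall a i, sv (Exp a i) = 0) ->
  red sv (AL W L ++ AComb (expand x (length ps)) (Old x) :: hc h')
         [AComb (map (sig x (p0 :: ps)) (m s)) (Old r0)].
Proof.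
  intros R P -> N D Z.
  apply (red_map sv (sig x (p0 :: ps))) in R; [|apply sig_good; auto].
  eapply red_trans; [|exact R]. apply red_refl.
  rewrite map_app, AL_fix by auto. apply Permutation_app_head.
  eapply perm_trans; [|symmetry; apply Permutation_map, hc_perm, P].
  change (hc ((hlab p0 ps, x) :: h')) with (AComb (m (hlab p0 ps)) (Old x) :: hc h').
  cbn [map fsub]. rewrite sig_hlab, hc_fix; auto.
Qed.

Lemma red_L sv W L h xa xb a b h2' pa psa pb psb s r0 :
  red sv (AL W L ++ hc h) [AComb (m s) (Old r0)] ->
  Permutation h ((a, xa) :: (b, xb) :: h2') -> a = hlab pa psa -> b = hlab pb psb ->
  NoDup (pa :: psa) -> NoDup (pb :: psb) ->
  (forall p, In p (pb :: psb) -> ~ In p (pa :: psa)) ->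
  (forall a' p, In a' (map fst h2') -> In p (vars a') -> ~ In p (pa :: psa) /\ ~ In p (pb :: psb)) ->
  (forall a i, sv (Exp a i) = 0) ->
  red sv (AL W L ++ AComb (expand xa (length psa)) (Old xa)
            :: AComb (expand xb (length psb)) (Old xb) :: hc h2')
     [AComb (map (sig xb (pb :: psb)) (map (sig xa (pa :: psa)) (m s))) (Old r0)].
Proof.
  intros R P Ea Eb Na Nb Dab D Z.
  eapply red_I in R; eauto.
  - apply (red_map sv (sig xb (pb :: psb))) in R; [|apply sig_good; auto].
    eapply red_trans; [|exact R]. apply red_refl.
    rewrite map_app, AL_fix by auto. apply Permutation_app_head.
    change (hc ((b, xb) :: h2')) with (AComb (m b) (Old xb) :: hc h2').
    cbn [map fsub]. rewrite expand_fix, Eb, sig_hlab, hc_fix; auto.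
    + intros a' p A B. apply (D a' p A B).
  - intros a' p [<-|A] B.
    + simpl in B. rewrite Eb, vars_hlab in B. apply Dab; auto.
    + apply (D a' p A B).
Qed.


Definition BUILD {G s C u} (d : deriv G s C u) n :=
  exists V L h r mx, corr d V L h r /\ Rg V n mx /\ n <= mx /\ SI V L h r C G /\
  (forall W sv, agree W V -> (forall a i, sv (Exp a i) = 0) ->
     red sv (AL W L ++ hc h) [AComb (m s) (Old r)]).

Definition REDP sv W L h s r := red sv (AL W L ++ hc h) [AComb (m s) (Old r)].

Lemma E_gen {G s C u} (d : deriv G s C u) G1 s1 C1 G2 s2 C2 n0
  V1 L1 h1 r1 m1 V2 L2 h2 r2 m2 lk :
  G = G1 ++ G2 ->
  Rg V1 n0 m1 -> n0 <= m1 -> SI V1 L1 h1 r1 C1 G1 ->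
  (forall W sv, agree W V1 -> (forall a i, sv (Exp a i) = 0) -> REDP sv W L1 h1 s1 r1) ->
  Rg V2 m1 m2 -> m1 <= m2 -> SI V2 L2 h2 r2 C2 G2 ->
  (forall W sv, agree W V2 -> (forall a i, sv (Exp a i) = 0) -> REDP sv W L2 h2 s2 r2) ->
  lprem lk = [r1; r2] -> lconcl lk = [m2] ->
  (NoDup (m2 :: map fst V1 ++ map fst V2) ->
     corr d ((m2, C) :: V1 ++ V2) (lk :: L1 ++ L2) (h1 ++ h2) m2) ->
  (forall W sv, (forall a i, sv (Exp a i) = 0) ->
     red sv (aps_link W lk ++ [AComb (m s1) (Old r1); AComb (m s2) (Old r2)])
            [AComb (m s) (Old m2)]) ->
  BUILD d n0.
Proof.
  intros EG R1 L1' S1 Red1 R2 L2' S2 Red2 Lp Lc Co Fin.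
  pose proof (SI_E _ _ _ _ _ _ _ _ _ _ _ _ _ _ _ _ C S1 S2 R1 R2 Lp Lc) as SS.
  exists ((m2, C) :: V1 ++ V2), (lk :: L1 ++ L2), (h1 ++ h2), m2, (S m2).
  assert (D : forall v, In v (map fst V2) -> ~ In v (map fst V1)).
  { intros v A B. apply R1 in B. apply R2 in A. lia. }
  assert (NR : ~ In m2 (map fst (V1 ++ V2))).
  { rewrite map_app. intro A. apply in_app_iff in A as [A|A]; [apply R1 in A|apply R2 in A]; lia. }
  split; [apply Co; destruct SS as (N&_); simpl in N; rewrite map_app in N; auto|].
  split; [intros v A; simpl in A; destruct A as [<-|A]; [lia|];
    rewrite map_app in A; apply in_app_iff in A as [A|A]; [apply R1 in A|apply R2 in A]; lia|].
  split; [lia|].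
  split; [subst G; exact SS|].
  intros W sv Ag Z. apply agree_cons in Ag; auto.
  eapply red_E2; [apply Red1|apply Red2|apply Fin]; auto.
  + eapply agree_app_l; eauto.
  + eapply agree_app_r; eauto.
Qed.

Lemma I_gen {G' g F u} (d : deriv G' g F u) G s0 C0 n0 V L h r0 mx a A x h' p0 ps lk :
  Rg V n0 mx -> n0 <= mx -> SI V L h r0 C0 G ->
  (forall W sv, agree W V -> (forall a i, sv (Exp a i) = 0) -> REDP sv W L h s0 r0) ->
  Permutation h ((a, x) :: h') -> vlab V x = A -> map (pr V) h' = G' ->
  a = hlab p0 ps -> length ps = fsort A -> NoDup (p0 :: ps) ->
  (forall a' p, In a' (map fst h') -> In p (vars a') -> ~ In p (p0 :: ps)) ->
  lprem lk = [r0] -> (forall v, In v (lconcl lk) <-> v = x \/ v = mx) ->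
  (~ In mx (map fst V) -> corr d ((mx, F) :: V) (lk :: L) h' mx) ->
  (forall W sv, (forall a i, sv (Exp a i) = 0) -> fsort (vlab W x) = length ps ->
     exists P, aps_link W lk = [P; AComb (expand x (length ps)) (Old x)] /\
       red sv [P; AComb (map (sig x (p0 :: ps)) (m s0)) (Old r0)] [AComb (m g) (Old mx)]) ->
  BUILD d n0.
Proof.
  intros R1 Le S1 Red1 P Ex EG Ea Len N D Lp Lc Co Fin.
  pose proof (SI_I _ _ _ _ _ _ _ _ _ _ _ _ F S1 R1 P Lp Lc) as SS.
  assert (NR : ~ In mx (map fst V)) by (intro Q; apply R1 in Q; lia).
  assert (Ix : In x (map fst V)).
  { destruct S1 as (_&_&_&_&_&J&_). apply J. eapply in_perm; [symmetry; apply Permutation_map, P|]. left; auto. }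
  exists ((mx, F) :: V), (lk :: L), h', mx, (S mx).
  split; [apply Co; auto|].
  split; [intros v Q; simpl in Q; destruct Q as [<-|Q]; [lia|apply R1 in Q; lia]|].
  split; [lia|].
  split; [rewrite <- EG; exact SS|].
  intros W sv Ag Z.
  assert (Fx : fsort (vlab W x) = length ps).
  { rewrite Ag by (right; auto). rewrite vlab_cons_ne by (intros ->; auto). rewrite Ex; auto. }
  destruct (Fin W sv Z Fx) as (Pl&E&Rf).
  apply agree_cons in Ag; auto.
  eapply red_trans; [|exact Rf].
  rewrite AL_cons, E.
  eapply red_trans; [apply red_refl|].
  - instantiate (1 := [Pl] ++ (AL W L ++ AComb (expand x (length ps)) (Old x) :: hc h')).
    simpl. apply perm_skip. apply Permutation_middle.
  - apply (red_frame_l sv _ [AComb (map (sig x (p0 :: ps)) (m s0)) (Old r0)] [Pl]). eapply red_I; eauto. apply Red1; auto.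
Qed.

Lemma perm5 {X} (T X1 X2 Y1 Y2 : list X) :
  Permutation (T ++ X1 ++ X2 ++ Y1 ++ Y2) ((X1 ++ Y1) ++ (X2 ++ T ++ Y2)).
Proof.
  eapply perm_trans; [apply Permutation_app_swap_app|]. rewrite <- app_assoc.
  apply Permutation_app_head. rewrite app_assoc.
  eapply perm_trans; [apply Permutation_app_swap_app|]. apply Permutation_app_head.
  rewrite <- app_assoc. apply Permutation_app_swap_app.
Qed.

Lemma L_gen {G s C u} (d : deriv G s C u) G1 s1 C1 G2 s2 n0
  V1 L1 h1 r1 m1 V2 L2 h2 r2 m2 a A b B xa xb h2' pa psa pb psb lk :
  G = G1 ++ map (pr V2) h2' ->
  Rg V1 n0 m1 -> n0 <= m1 -> SI V1 L1 h1 r1 C1 G1 ->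
  (forall W sv, agree W V1 -> (forall a i, sv (Exp a i) = 0) -> REDP sv W L1 h1 s1 r1) ->
  Rg V2 m1 m2 -> m1 <= m2 -> SI V2 L2 h2 r2 C G2 ->
  (forall W sv, agree W V2 -> (forall a i, sv (Exp a i) = 0) -> REDP sv W L2 h2 s2 r2) ->
  Permutation h2 ((a, xa) :: (b, xb) :: h2') -> vlab V2 xa = A -> vlab V2 xb = B ->
  a = hlab pa psa -> b = hlab pb psb -> length psa = fsort A -> length psb = fsort B ->
  NoDup (pa :: psa) -> NoDup (pb :: psb) ->
  (forall p, In p (pb :: psb) -> ~ In p (pa :: psa)) ->
  (forall a' p, In a' (map fst h2') -> In p (vars a') -> ~ In p (pa :: psa) /\ ~ In p (pb :: psb)) ->
  lprem lk = [r1] -> lconcl lk = [xa; xb] ->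
  (NoDup (map fst V1 ++ map fst V2) -> corr d (V1 ++ V2) (lk :: L1 ++ L2) (h1 ++ h2') r2) ->
  (forall W sv, (forall a i, sv (Exp a i) = 0) ->
     fsort (vlab W xa) = length psa -> fsort (vlab W xb) = length psb ->
     exists P, aps_link W lk = [P; AComb (expand xa (length psa)) (Old xa);
                                   AComb (expand xb (length psb)) (Old xb)] /\
       red sv [P; AComb (m s1) (Old r1);
               AComb (map (sig xb (pb :: psb)) (map (sig xa (pa :: psa)) (m s2))) (Old r2)]
           [AComb (m s) (Old r2)]) ->
  BUILD d n0.
Proof.
  intros EG R1 Le1 S1 Red1 R2 Le2 S2 Red2 P Exa Exb Ea Eb Lna Lnb Na Nb Dab D Lp Lc Co Fin.
  pose proof (SI_L _ _ _ _ _ _ _ _ _ _ _ _ _ _ _ _ _ _ _ _ _ S1 S2 R1 R2 P Lp Lc) as SS.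
  assert (Dv : forall v, In v (map fst V2) -> ~ In v (map fst V1)).
  { intros v Q1 Q2. apply R1 in Q2. apply R2 in Q1. lia. }
  assert (Ixa : In xa (map fst V2)).
  { destruct S2 as (_&_&_&_&_&J&_). apply J. eapply in_perm; [symmetry; apply Permutation_map, P|]. left; auto. }
  assert (Ixb : In xb (map fst V2)).
  { destruct S2 as (_&_&_&_&_&J&_). apply J. eapply in_perm; [symmetry; apply Permutation_map, P|]. right; left; auto. }
  exists (V1 ++ V2), (lk :: L1 ++ L2), (h1 ++ h2'), r2, m2.
  split; [apply Co; destruct SS as (Nd&_); rewrite map_app in Nd; auto|].
  split; [intros v Q; rewrite map_app in Q; apply in_app_iff in Q as [Q|Q]; [apply R1 in Q|apply R2 in Q]; lia|].
  split; [lia|].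
  split; [rewrite EG; exact SS|].
  intros W sv Ag Z.
  assert (Ag1 : agree W V1) by (eapply agree_app_l; eauto).
  assert (Ag2 : agree W V2) by (eapply agree_app_r; eauto).
  destruct (Fin W sv Z) as (Pl&E&Rf).
  { rewrite Ag2, Exa; auto. }
  { rewrite Ag2, Exb; auto. }
  eapply red_trans; [|exact Rf].
  rewrite AL_cons, E, AL_app, hc_app.
  eapply red_trans; [apply red_refl|].
  - instantiate (1 := [Pl] ++ ((AL W L1 ++ hc h1) ++
       (AL W L2 ++ AComb (expand xa (length psa)) (Old xa)
          :: AComb (expand xb (length psb)) (Old xb) :: hc h2'))).
    simpl. apply perm_skip. rewrite <- (app_assoc (AL W L1)).
    exact (perm5 [AComb (expand xa (length psa)) (Old xa); AComb (expand xb (length psb)) (Old xb)]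
      (AL W L1) (AL W L2) (hc h1) (hc h2')).
  - apply (red_frame_l sv _ [AComb (m s1) (Old r1);
        AComb (map (sig xb (pb :: psb)) (map (sig xa (pa :: psa)) (m s2))) (Old r2)] [Pl]).
    apply (red_two sv _ _ [_] [_]).
    + apply Red1; auto.
    + eapply red_L; eauto. apply Red2; auto.
Qed.


Lemma disj_lab s a g p0 ps : Permutation (vars s) (vars a ++ vars g) -> NoDup (vars s) -> a = hlab p0 ps ->
  forall p, In p (vars g) -> ~ In p (p0 :: ps).
Proof.
  intros E N Ea. eapply nd_perm in N; [|exact E]. rewrite Ea, vars_hlab in N. apply nd_app in N as (_&_&D).
  intros p A B. eapply D; eauto.
Qed.

Lemma disj4 (l1 l2 l3 l4 : list nat) : NoDup (l1 ++ l2 ++ l3 ++ l4) ->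
  (forall p, In p l1 -> ~ In p l2) /\ (forall p, In p l1 -> ~ In p l3) /\
  (forall p, In p l4 -> ~ In p l2) /\ (forall p, In p l4 -> ~ In p l3).
Proof.
  intro N. apply nd_app in N as (_&N&D1). apply nd_app in N as (_&N&D2).
  apply nd_app in N as (_&_&D3).
  repeat split; intros p A B.
  - eapply D1; eauto. apply in_app_iff; auto.
  - eapply D1; eauto. rewrite !in_app_iff; auto.
  - eapply D2; eauto. rewrite !in_app_iff; auto.
  - eapply D3; eauto.
Qed.

Lemma sig_sig_fix x ps y qs s : (forall p, In p (vars s) -> ~ In p qs) ->
  map (sig y qs) (map (sig x ps) (m s)) = map (sig x ps) (m s).
Proof.
  induction s as [|[p|] t IH]; simpl; intro H; auto.
  - f_equal; [|apply IH; intros; apply H; simpl; auto].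
    destruct (idx p ps); simpl; auto. rewrite idx_none; auto.
  - f_equal; apply IH; auto.
Qed.

Lemma prod_fin sv r1 r2 ea eb p1 q1 q2 :
  red sv [AProd (Old r1) ea eb; AComb p1 (Old r1); AComb (q1 ++ ea ++ eb ++ q2) (Old r2)]
         [AComb (q1 ++ p1 ++ q2) (Old r2)].
Proof.
  eapply red_trans.
  - apply red_step. apply (k_prod sv _ [AComb p1 (Old r1)] (Old r1) ea eb q1 q2 (Old r2)).
    apply perm_skip. apply perm_swap.
  - apply red_step. apply (k_plus sv _ [] q1 q2 p1 (Old r1) (Old r2)). apply Permutation_refl.
Qed.

Lemma wrap_fin sv k r1 r2 e1 e2 eb p1 q1 q2 : ksel k (isort sv e1) (isort sv e2) ->
  red sv [AWrap k (Old r1) (e1 ++ IOne :: e2) eb; AComb p1 (Old r1);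
          AComb (q1 ++ e1 ++ eb ++ e2 ++ q2) (Old r2)]
         [AComb (q1 ++ p1 ++ q2) (Old r2)].
Proof.
  intro K. eapply red_trans.
  - apply red_step. apply (k_wrap sv _ [AComb p1 (Old r1)] k (Old r1) e1 e2 eb q1 q2 (Old r2)); auto.
    apply perm_skip. apply perm_swap.
  - apply red_step. apply (k_plus sv _ [] q1 q2 p1 (Old r1) (Old r2)). apply Permutation_refl.
Qed.

Lemma build G s C u (d : deriv G s C u) : forall n, BUILD d n.
Proof.
  induction d as [p0 ps A Hn Hl Hw
    | G1 G2 a g A C u1 u2 d1 IH1 d2 IH2 H
    | G G' a g A C u d IH P Wf
    | G1 G2 g b B C u1 u2 d1 IH1 d2 IH2 H
    | G G' g b B C u d IH P Wf
    | G1 G2 a b A B u1 u2 d1 IH1 d2 IH2 H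
    | G1 G2 G2' dl a b g1 g2 A B C u1 u2 d1 IH1 d2 IH2 P H
    | k G1 G2 a g s A C u1 u2 d1 IH1 d2 IH2 Wr H
    | k G G' a g s A C u d IH P Wr Wf
    | k G1 G2 g b s B C u1 u2 d1 IH1 d2 IH2 Wr H
    | k G G' g b s B C u d IH P Wr Wf
    | k G1 G2 a b s A B u1 u2 d1 IH1 d2 IH2 Wr H
    | k G1 G2 G2' dl a b s g1 g2 A B C u1 u2 d1 IH1 d2 IH2 P Wr H]; intro n0.
  -
    exists [(n0, A)], [], [(hlab p0 ps, n0)], n0, (S n0).
    split; [apply c_hyp|].
    split; [intros v [<-|[]]; simpl; lia|].
    split; [lia|].
    split.
    + unfold SI. simpl. rewrite Nat.eqb_refl. unfold pr; simpl. rewrite Nat.eqb_refl.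
      repeat split; try (constructor; [tauto|constructor]); try tauto;
        try (intros v Q; exact Q); try (intros v [->|[]]; tauto);
        try (intros v []); try (intros; destruct H as [->|[]]; auto).
    + intros W sv _ _. apply red_refl. apply Permutation_refl.
  -
    destruct (IH1 n0) as (V1&L1&h1&r1&m1&Co1&R1&Le1&S1&Red1).
    destruct (IH2 m1) as (V2&L2&h2&r2&m2&Co2&R2&Le2&S2&Red2).
    eapply (E_gen _ G1 a A G2 g (Under A C) n0 V1 L1 h1 r1 m1 V2 L2 h2 r2 m2 (LUnderL r1 r2 m2));
      eauto.
    + intro N; eapply c_underE; eauto.
    + intros W sv Z; simpl; rewrite m_app; apply comb2.
  -
    destruct (IH n0) as (V&L&h&r0&mx&Co&R&Le&S1&Red).
    pose proof (LI_deriv _ _ _ _ d) as Li.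
    pose proof S1 as (_&_&_&MG&_).
    destruct (I_setup V h G G' a A MG P) as (x&h'&Ph&Ex&EG').
    destruct (lab_setup G (a ++ g) u a A G' Li P) as (p0&ps&Ea&Len&N&Dg&_).
    destruct Li as (_&_&_&Nds&_).
    eapply (I_gen _ G (a ++ g) C n0 V L h r0 mx a A x h' p0 ps (LUnderR r0 x mx)); eauto.
    + intros a' p Q1 Q2; apply Dg; eapply hlabels; eauto.
    + intros v; simpl; intuition.
    + intro NR; eapply c_underI; eauto.
    + intros W sv Z Fx. exists (AUnder (Old r0) (expand x (length ps)) (Old mx)). split.
      * simpl. rewrite Fx. reflexivity.
      * rewrite m_app, map_app, Ea, sig_hlab, sig_fix; auto.
        -- apply red_step. apply (k_under sv _ [] (Old r0) (expand x (length ps)) (m g) (Old mx)).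
           apply Permutation_refl.
        -- eapply disj_lab; eauto. rewrite vars_app. apply Permutation_refl.
  -
    destruct (IH1 n0) as (V1&L1&h1&r1&m1&Co1&R1&Le1&S1&Red1).
    destruct (IH2 m1) as (V2&L2&h2&r2&m2&Co2&R2&Le2&S2&Red2).
    eapply (E_gen _ G1 g (Over C B) G2 b B n0 V1 L1 h1 r1 m1 V2 L2 h2 r2 m2 (LOverL r1 r2 m2));
      eauto.
    + intro N; eapply c_overE; eauto.
    + intros W sv Z; simpl; rewrite m_app; apply comb2.
  -
    destruct (IH n0) as (V&L&h&r0&mx&Co&R&Le&S1&Red).
    pose proof (LI_deriv _ _ _ _ d) as Li.
    pose proof S1 as (_&_&_&MG&_).
    destruct (I_setup V h G G' b B MG P) as (x&h'&Ph&Ex&EG').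
    destruct (lab_setup G (g ++ b) u b B G' Li P) as (p0&ps&Ea&Len&N&Dg&_).
    destruct Li as (_&_&_&Nds&_).
    eapply (I_gen _ G (g ++ b) C n0 V L h r0 mx b B x h' p0 ps (LOverR r0 mx x)); eauto.
    + intros a' p Q1 Q2; apply Dg; eapply hlabels; eauto.
    + intros v; simpl; intuition.
    + intro NR; eapply c_overI; eauto.
    + intros W sv Z Fx. exists (AOver (Old r0) (expand x (length ps)) (Old mx)). split.
      * simpl. rewrite Fx. reflexivity.
      * rewrite m_app, map_app, Ea, sig_hlab, sig_fix; auto.
        -- apply red_step. apply (k_over sv _ [] (Old r0) (expand x (length ps)) (m g) (Old mx)).
           apply Permutation_refl.
        -- eapply disj_lab; eauto. rewrite vars_app. apply Permutation_app_comm.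
  -
    destruct (IH1 n0) as (V1&L1&h1&r1&m1&Co1&R1&Le1&S1&Red1).
    destruct (IH2 m1) as (V2&L2&h2&r2&m2&Co2&R2&Le2&S2&Red2).
    eapply (E_gen _ G1 a A G2 b B n0 V1 L1 h1 r1 m1 V2 L2 h2 r2 m2 (LProdR r1 r2 m2));
      eauto.
    + intro N; eapply c_prodI; eauto.
    + intros W sv Z; simpl; rewrite m_app; apply comb2.
  -
    destruct (IH1 n0) as (V1&L1&h1&r1&m1&Co1&R1&Le1&S1&Red1).
    destruct (IH2 m1) as (V2&L2&h2&r2&m2&Co2&R2&Le2&S2&Red2).
    pose proof (LI_deriv _ _ _ _ d2) as Li.
    pose proof S2 as (_&_&_&MG&_).
    destruct (I_setup2 V2 h2 G2 G2' a A b B MG P) as (xa&xb&h2'&Ph&Exa&Exb&EG').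
    assert (P' : Permutation G2 ((b, B) :: (a, A) :: G2')) by (eapply perm_trans; [exact P|apply perm_swap]).
    destruct (lab_setup _ _ _ a A _ Li P) as (pa&psa&Ea&Lna&Na&Dga&_).
    destruct (lab_setup _ _ _ b B _ Li P') as (pb&psb&Eb&Lnb&Nb&Dgb&_).
    destruct Li as (_&_&_&Nds&_).
    rewrite !vars_app in Nds. destruct (disj4 _ _ _ _ Nds) as (H1a&H1b&H2a&H2b).
    rewrite Ea, vars_hlab in H1a, H2a. rewrite Eb, vars_hlab in H1b, H2b.
    assert (Dab : forall p, In p (pb :: psb) -> ~ In p (pa :: psa)).
    { intros p Q. apply Dga. rewrite gvars_cons, Eb, vars_hlab. apply in_or_app; auto. }
    eapply (L_gen _ G1 dl (Prod A B) G2 (g1 ++ a ++ b ++ g2) n0 V1 L1 h1 r1 m1 V2 L2 h2 r2 m2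
              a A b B xa xb h2' pa psa pb psb (LProdL r1 xa xb)); eauto.
    + rewrite EG'; auto.
    + intros a' p Q1 Q2. assert (Q : In p (gvars G2')) by (eapply hlabels; eauto).
      split; [apply Dga|apply Dgb]; rewrite gvars_cons; apply in_or_app; auto.
    + intro N; eapply c_prodE; eauto.
    + intros W sv Z Fa Fb.
      exists (AProd (Old r1) (expand xa (length psa)) (expand xb (length psb))). split.
      * simpl. rewrite Fa, Fb. reflexivity.
      * rewrite !m_app, !map_app.
        rewrite (sig_fix xa _ g1), (sig_fix xa _ b), (sig_fix xa _ g2) by
          (auto; intros p Q; rewrite Eb, vars_hlab in Q; apply Dab; auto).
        rewrite Ea, (sig_hlab xa pa psa Na).
        rewrite (sig_fix xb _ g1), (sig_fix xb _ g2), expand_fix by auto.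
        rewrite Eb, (sig_hlab xb pb psb Nb).
        apply prod_fin.
  -
    destruct (IH1 n0) as (V1&L1&h1&r1&m1&Co1&R1&Le1&S1&Red1).
    destruct (IH2 m1) as (V2&L2&h2&r2&m2&Co2&R2&Le2&S2&Red2).
    eapply (E_gen _ G1 a A G2 g (Infix k A C) n0 V1 L1 h1 r1 m1 V2 L2 h2 r2 m2 (LInfixL k r1 r2 m2));
      eauto.
    + intro N; eapply c_infixE; eauto.
    + intros W sv Z; simpl; apply tens2; auto.
  -
    destruct (IH n0) as (V&L&h&r0&mx&Co&R&Le&S1&Red).
    pose proof (LI_deriv _ _ _ _ d) as Li.
    pose proof S1 as (_&_&_&MG&_).
    destruct (I_setup V h G G' a A MG P) as (x&h'&Ph&Ex&EG').
    destruct (lab_setup G s u a A G' Li P) as (p0&ps&Ea&Len&N&Dg&_).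
    destruct Li as (_&_&_&Nds&_).
    pose proof Wr as Wr'. apply vars_wrap in Wr' as (a1&a2&Ea'&K&Es&Va&Vs).
    assert (Dj : forall p, In p (vars g) -> ~ In p (p0 :: ps)).
    { eapply disj_lab; eauto. rewrite Vs, Va. permn. }
    eapply (I_gen _ G s C n0 V L h r0 mx a A x h' p0 ps (LInfixR k r0 x mx)); eauto.
    + intros a' p Q1 Q2; apply Dg; eapply hlabels; eauto.
    + intros v; simpl; intuition.
    + intro NR; eapply c_infixI; eauto.
    + intros W sv Z Fx. exists (AInfix k (Old r0) (expand x (length ps)) (Old mx)). split.
      * simpl. rewrite Fx. reflexivity.
      * rewrite <- (sig_hlab x p0 ps N), <- Ea, Ea', Es, !m_app, !map_app, (sig_fix x _ g); auto.
        apply red_step. cbn [m map item_of_sym sig].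
        apply (k_infix sv _ [] k (Old r0) (map (sig x (p0 :: ps)) (m a1))
                 (map (sig x (p0 :: ps)) (m a2)) (m g) (Old mx)).
        -- apply Permutation_refl.
        -- rewrite !isort_msig; auto.
  -
    destruct (IH1 n0) as (V1&L1&h1&r1&m1&Co1&R1&Le1&S1&Red1).
    destruct (IH2 m1) as (V2&L2&h2&r2&m2&Co2&R2&Le2&S2&Red2).
    eapply (E_gen _ G1 g (Extr k C B) G2 b B n0 V1 L1 h1 r1 m1 V2 L2 h2 r2 m2 (LExtrL k r1 r2 m2));
      eauto.
    + intro N; eapply c_extrE; eauto.
    + intros W sv Z; simpl; apply tens2; auto.
  -
    destruct (IH n0) as (V&L&h&r0&mx&Co&R&Le&S1&Red).
    pose proof (LI_deriv _ _ _ _ d) as Li.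
    pose proof S1 as (_&_&_&MG&_).
    destruct (I_setup V h G G' b B MG P) as (x&h'&Ph&Ex&EG').
    destruct (lab_setup G s u b B G' Li P) as (p0&ps&Ea&Len&N&Dg&_).
    destruct Li as (_&_&_&Nds&_).
    pose proof Wr as Wr'. apply vars_wrap in Wr' as (g1&g2&Eg&K&Es&Vg&Vs).
    assert (Dj : forall p, In p (vars g) -> ~ In p (p0 :: ps)).
    { eapply disj_lab; eauto. rewrite Vs, Vg. permn. }
    eapply (I_gen _ G s C n0 V L h r0 mx b B x h' p0 ps (LExtrR k r0 mx x)); eauto.
    + intros a' p Q1 Q2; apply Dg; eapply hlabels; eauto.
    + intros v; simpl; intuition.
    + intro NR; eapply c_extrI; eauto.
    + intros W sv Z Fx. exists (AExtr k (Old r0) (expand x (length ps)) (Old mx)). split.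
      * simpl. rewrite Fx. reflexivity.
      * assert (D1 : map (sig x (p0 :: ps)) (m g1) = m g1).
        { apply sig_fix. intros p Q. apply Dj. rewrite Eg, vars_app. apply in_or_app; auto. }
        assert (D2 : map (sig x (p0 :: ps)) (m g2) = m g2).
        { apply sig_fix. intros p Q. apply Dj. rewrite Eg, vars_app. apply in_or_app; right; auto. }
        rewrite Es, !m_app, !map_app, D1, D2, Ea, sig_hlab; auto.
        rewrite Eg, m_app. cbn [m map item_of_sym].
        apply red_step.
        apply (k_extr sv _ [] k (Old r0) (expand x (length ps)) (m g1) (m g2) (Old mx)).
        -- apply Permutation_refl.
        -- rewrite !isort_m; auto.
  -
    destruct (IH1 n0) as (V1&L1&h1&r1&m1&Co1&R1&Le1&S1&Red1).
    destruct (IH2 m1) as (V2&L2&h2&r2&m2&Co2&R2&Le2&S2&Red2).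
    eapply (E_gen _ G1 a A G2 b B n0 V1 L1 h1 r1 m1 V2 L2 h2 r2 m2 (LWrapR k r1 r2 m2));
      eauto.
    + intro N; eapply c_wrapI; eauto.
    + intros W sv Z; simpl; apply tens2; auto.
  -
    destruct (IH1 n0) as (V1&L1&h1&r1&m1&Co1&R1&Le1&S1&Red1).
    destruct (IH2 m1) as (V2&L2&h2&r2&m2&Co2&R2&Le2&S2&Red2).
    pose proof (LI_deriv _ _ _ _ d2) as Li.
    pose proof S2 as (_&_&_&MG&_).
    destruct (I_setup2 V2 h2 G2 G2' a A b B MG P) as (xa&xb&h2'&Ph&Exa&Exb&EG').
    assert (P' : Permutation G2 ((b, B) :: (a, A) :: G2')) by (eapply perm_trans; [exact P|apply perm_swap]).
    destruct (lab_setup _ _ _ a A _ Li P) as (pa&psa&Ea&Lna&Na&Dga&_).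
    destruct (lab_setup _ _ _ b B _ Li P') as (pb&psb&Eb&Lnb&Nb&Dgb&_).
    destruct Li as (_&_&_&Nds&_).
    pose proof Wr as Wr'. apply vars_wrap in Wr' as (a1&a2&Ea'&K&Es&Va&Vs).
    assert (Nds' : NoDup (vars g1 ++ vars a ++ vars b ++ vars g2)).
    { eapply nd_perm; [|exact Nds]. rewrite !vars_app, Vs, Va. permn. }
    destruct (disj4 _ _ _ _ Nds') as (H1a&H1b&H2a&H2b).
    rewrite Ea, vars_hlab in H1a, H2a. rewrite Eb, vars_hlab in H1b, H2b.
    assert (Dab : forall p, In p (pb :: psb) -> ~ In p (pa :: psa)).
    { intros p Q. apply Dga. rewrite gvars_cons, Eb, vars_hlab. apply in_or_app; auto. }
    assert (Ia1 : forall p, In p (vars a1) -> In p (pa :: psa)).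
    { intros p Q. rewrite <- vars_hlab, <- Ea, Va. apply in_or_app; auto. }
    assert (Ia2 : forall p, In p (vars a2) -> In p (pa :: psa)).
    { intros p Q. rewrite <- vars_hlab, <- Ea, Va. apply in_or_app; auto. }
    eapply (L_gen _ G1 dl (Wrap k A B) G2 (g1 ++ s ++ g2) n0 V1 L1 h1 r1 m1 V2 L2 h2 r2 m2
              a A b B xa xb h2' pa psa pb psb (LWrapL k r1 xa xb)); eauto.
    + rewrite EG'; auto.
    + intros a' p Q1 Q2. assert (Q : In p (gvars G2')) by (eapply hlabels; eauto).
      split; [apply Dga|apply Dgb]; rewrite gvars_cons; apply in_or_app; auto.
    + intro N; eapply c_wrapE; eauto.
    + intros W sv Z Fa Fb.
      exists (AWrap k (Old r1) (expand xa (length psa)) (expand xb (length psb))). split.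
      * simpl. rewrite Fa, Fb. reflexivity.
      * rewrite <- (sig_hlab xa pa psa Na), <- Ea, Ea', Es.
        rewrite !m_app, !map_app.
        rewrite (sig_fix xa _ g1), (sig_fix xa _ b), (sig_fix xa _ g2) by
          (auto; intros p Q; rewrite Eb, vars_hlab in Q; apply Dab; auto).
        rewrite (sig_fix xb _ g1), (sig_fix xb _ g2) by auto.
        rewrite (sig_sig_fix xa _ xb _ a1), (sig_sig_fix xa _ xb _ a2) by
          (intros p Q1 Q2; eapply Dab; eauto).
        rewrite Eb, (sig_hlab xb pb psb Nb).
        change (m (SOne :: a2)) with (IOne :: m a2). cbn [map sig].
        rewrite <- !app_assoc.
        apply wrap_fin. rewrite !isort_msig; auto.
Qed.


Lemma combine_hc h :
  map (fun p => AComb (map item_of_sym (snd p)) (Old (fst p))) (combine (map snd h) (map fst h)) = hc h.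
Proof. induction h as [|[a v] t IH]; simpl; auto. f_equal; auto. Qed.

Theorem lemma1 (G : list (dstring * formula)) (g : dstring) (C : formula)
    (u : list nat) (d : deriv G g C u) :
  exists (V : list (nat * formula)) (L : list link) (hs : list nat) (r : nat),
    proof_net V L /\
    NoDup hs /\ (forall v, is_hyp V L v <-> In v hs) /\
    map (vlab V) hs = map snd G /\
    (forall v, is_concl V L v <-> v = r) /\ vlab V r = C /\
    clos_refl_trans _ (contr (vsort V))
      (aps V L (combine hs (map fst G)))
      (AComb (map item_of_sym g) (Old r) :: nil).
Proof.
  destruct (build G g C u d 0) as (V&L&h&r&mx&Co&R&Le&S&Red).
  destruct S as (N&I&E&MG&Nh&J&K&P&Y&Z).
  exists V, L, (map snd h), r.
  split; [exists G, g, C, u, d, h, r; exact Co|].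
  split; [auto|].
  split.
  { intro v. unfold is_hyp. split.
    - intros (A&B). apply (proj2 (Y v A)). intro Q. apply B.
      unfold CL in Q. apply in_flat_map in Q. exact Q.
    - intro A. split; [apply J; auto|]. intros Q. apply (proj1 (Y v (J v A)) A).
      unfold CL. apply in_flat_map. exact Q. }
  split; [rewrite <- MG, map_map, map_map; reflexivity|].
  split.
  { intro v. unfold is_concl. split.
    - intros (A&B). apply (proj2 (Z v A)). intro Q. apply B.
      unfold PL in Q. apply in_flat_map in Q. exact Q.
    - intros ->. split; auto. intros Q. apply (proj1 (Z r I) eq_refl).
      unfold PL. apply in_flat_map. exact Q. }
  split; [auto|].
  destruct (Red V (vsort V)) as (M'&H1&H2); [intros v _; reflexivity|intros; reflexivity|].
  symmetry in H2. apply Permutation_length_1_inv in H2. subst M'.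
  unfold aps. replace (map fst G) with (map fst h).
  - rewrite combine_hc. exact H1.
  - rewrite <- MG, map_map. reflexivity.
Qed.
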